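(* Assume the setting, the majorant assumptions and the constants described in the context. Let $x_0\in C\cap B(x_*,\sigma)\setminus\{x_*\}$ and $\{\theta_k\}\subset[0,\lambda^2/2]$. Let $\{M_k\}$, $\{(s_k,r_k,y_k)\}$ and $\{x_k\}$ be generated by the INL-CondG method started at $x_0$ with parameters $\{\theta_k\}$ (assume the method does not stop, i.e. $F(x_k)\neq 0$ for all $k$). Assume that for all $k\ge 0$ $$\|M_k^{-1}F'(x_k)\|\le \omega_1,\qquad \|M_k^{-1}F'(x_k)-I\|\le\omega_2,$$ and that there are invertible matrices $P_k$ and scalars $\eta_k$ with $$\|P_kr_k\|\le \eta_k\|P_kF(x_k)\|,\qquad 0\le \eta_k\,\mathrm{cond}(P_kF'(x_k))\le\vartheta .$$ Then $\{x_k\}\subset B(x_*,\sigma)\cap C$, $x_k\to x_*$, and $$\|x_{k+1}-x_*\|<\|x_k-x_*\|\ \ (k\ge0),\qquad \limsup_{k\to\infty}\frac{\|x_{k+1}-x_*\|}{\|x_k-x_*\|}\le \omega_1\big[(1+\vartheta)\sqrt{2\tilde\theta}+\vartheta\big]+\omega_2,$$ where $\tilde\theta=\limsup_{k\to\infty}\theta_k$. Moreover, if additionally for some $0<p\le1$ the following condition holds: (h3) the function $(0,\nu)\ni t\mapsto [f(t)/f'(t)-t]/t^{p+1}$ is strictly increasing, then for every integer $k\ge0$ $$\|x_{k+1}-x_*\|\le \omega_1(1+\vartheta)(1+\lambda)\Big(\frac{f(\|x_0-x_*\|)}{f'(\|x_0-x_*\|)}-\|x_0-x_*\|\Big)\B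ig(\frac{\|x_k-x_*\|}{\|x_0-x_*\|}\Big)^{p+1}+\big(\omega_1[(1+\vartheta)\lambda+\vartheta]+\omega_2\big)\|x_k-x_*\|.$$
   Context: Setting: $\Omega\subset\mathbb{R}^n$ is open, $F:\Omega\to\mathbb{R}^n$ is continuously differentiable with Jacobian $F'(x)$, $C\subset\Omega$ is a nonempty convex compact set, and $x_*\in C$ satisfies $F(x_* )=0$ with $F'(x_* )$ nonsingular. $\|\cdot\|$ is the Euclidean norm on $\mathbb{R}^n$ and the induced operator norm on matrices; $B(a,\delta)$ is the open ball of center $a$ and radius $\delta$; $\mathrm{cond}(A)=\|A^{-1}\|\|A\|$. Majorant assumptions: $R>0$, $\kappa:=\sup\{t\in[0,R): B(x_*,t)\subset\Omega\}$, and $f:[0,R)\to\mathbb{R}$ is continuously differentiable with $$\|F'(x_* )^{-1}[F'(x)-F'(x_*+\tau(x-x_* ))]\|\le f'(\|x-x_*\|)-f'(\tau\|x-x_*\|)\quad\text{for all }\tau\in[0,1],\ x\in B(x_*,\kappa),$$ (h1) $f(0)=0$, $f'(0)=-1$; (h2) $f'$ is strictly increasing. Constants: $0\le\vartheta<1$, $0\le\omega_2<\omega_1$, $\omega_1\vartheta+\omega_2<1$, $\lambda\in[0,(1-\omega_2-\omega_1\vartheta)/(\omega_1(1+\vartheta)))$; $\nu:=\sup\{t\in[0,R): f'(t)<0\}$; $\rho:=\sup\{\delta\in(0,\nu): \omega_1(1+\vartheta)(1+\lambda)\big(\tfrac{f(t)}{tf'(t)}-1\big)+\omega_1[(1+\vartheta)\lambda+\vartheta]+\omega_2<1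 \text{ for all } t\in(0,\delta)\}$; $\sigma:=\min\{\kappa,\rho\}$. CondG procedure $z=\mathrm{CondG}(y,x,\varepsilon)$ (for $y\in\mathbb{R}^n$, $x\in C$, $\varepsilon\ge0$): set $z_1=x$, $t=1$. (P1) Compute an optimal solution $u_t$ of $g_t^*=\min_{u\in C}\langle z_t-y,u-z_t\rangle$. (P2) If $g_t^*\ge-\varepsilon$, set $z=z_t$ and stop; otherwise set $\alpha_t=\min\{1,-g_t^*/\|u_t-z_t\|^2\}$, $z_{t+1}=z_t+\alpha_t(u_t-z_t)$, $t\leftarrow t+1$ and go to (P1). INL-CondG method: given $x_0\in C$ and $\{\theta_j\}\subset[0,\infty)$, for $k=0,1,\dots$: if $F(x_k)=0$ stop; otherwise choose an invertible matrix $M_k$ (approximating $F'(x_k)$) and compute $(s_k,r_k,y_k)$ with $M_ks_k=-F(x_k)+r_k$, $y_k=x_k+s_k$; then set $x_{k+1}=\mathrm{CondG}(y_k,x_k,\theta_k\|s_k\|^2)$. *)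

(* Defs.v *)
(* classical reals.  Vectors of R^n are represented as
   functions nat -> R of which only the coordinates 0..n-1 matter;
   n x n matrices as functions nat -> nat -> R (entries (i,j), i,j < n). *)
From Stdlib Require Import Reals Lra ClassicalEpsilon.
Open Scope R_scope.

Definition vec := nat -> R.
Definition mat := nat -> nat -> R.

Fixpoint rsum (n : nat) (f : nat -> R) : R :=
  match n with O => 0 | S m => rsum m f + f m end.

Definition vzero : vec := fun _ => 0.
Definition vadd (x y : vec) : vec := fun i => x i + y i.
Definition vsub (x y : vec) : vec := fun i => x i - y i.
Definition vopp (x : vec) : vec := fun i => - x i.
Definition vscal (a : R) (x : vec) : vec := fun i => a * x i.
Definition vdot (n : nat) (x y : vec) : R := rsum n (fun i => x i * y i).
Definition vnorm (n : nat) (x : vec) : R := sqrt (vdot n x x).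
Definition veq (n : nat) (x y : vec) : Prop := forall i, (i < n)%nat -> x i = y i.

Definition mv (n : nat) (A : mat) (x : vec) : vec :=
  fun i => rsum n (fun j => A i j * x j).
Definition mm (n : nat) (A B : mat) : mat :=
  fun i k => rsum n (fun j => A i j * B j k).
Definition msub (A B : mat) : mat := fun i j => A i j - B i j.
Definition idm : mat := fun i j => if Nat.eqb i j then 1 else 0.
Definition meq (n : nat) (A B : mat) : Prop :=
  forall i j, (i < n)%nat -> (j < n)%nat -> A i j = B i j.
Definition is_inverse (n : nat) (A B : mat) : Prop :=
  meq n (mm n A B) idm /\ meq n (mm n B A) idm.
Definition invertible (n : nat) (A : mat) : Prop := exists B, is_inverse n A B.
(* A^{-1} (meaningful when A is invertible) *)
Definition mat_inv (n : nat) (A : mat) : mat :=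
  epsilon (inhabits idm) (fun B => is_inverse n A B).

(* supremum of a set of reals (meaningful when it is nonempty and bounded above) *)
Definition Rsup (E : R -> Prop) : R := epsilon (inhabits 0) (fun m => is_lub E m).

Definition opnorm (n : nat) (A : mat) : R :=
  Rsup (fun c => exists x, vnorm n x <= 1 /\ c = vnorm n (mv n A x)).
Definition cond (n : nat) (A : mat) : R := opnorm n (mat_inv n A) * opnorm n A.

Definition ball (n : nat) (a : vec) (d : R) : vec -> Prop :=
  fun x => vnorm n (vsub x a) < d.

Definition is_open (n : nat) (Om : vec -> Prop) : Prop :=
  forall x, Om x -> exists r, r > 0 /\ forall z, ball n x r z -> Om z.
Definition is_convex (C : vec -> Prop) : Prop :=
  forall x z t, C x -> C z -> 0 <= t <= 1 -> C (vadd x (vscal t (vsub z x))).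
Definition is_compact (n : nat) (C : vec -> Prop) : Prop :=
  forall u : nat -> vec, (forall k, C (u k)) ->
    exists (phi : nat -> nat) (l : vec),
      (forall k, (phi k < phi (S k))%nat) /\ C l /\
      Un_cv (fun k => vnorm n (vsub (u (phi k)) l)) 0.

Definition C1_map (n : nat) (Om : vec -> Prop) (F : vec -> vec) (DF : vec -> mat) : Prop :=
  (forall x, Om x -> forall e, e > 0 -> exists d, d > 0 /\
     forall h, vnorm n h < d -> Om (vadd x h) ->
       vnorm n (vsub (vsub (F (vadd x h)) (F x)) (mv n (DF x) h)) <= e * vnorm n h) /\
  (forall x, Om x -> forall e, e > 0 -> exists d, d > 0 /\
     forall z, Om z -> vnorm n (vsub z x) < d -> opnorm n (msub (DF z) (DF x)) < e).

Definition C1_interval (f df : R -> R) (a b : R) : Prop :=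
  (forall t, a <= t < b -> forall e, e > 0 -> exists d, d > 0 /\
     forall s, a <= s < b -> Rabs (s - t) < d ->
       Rabs (f s - f t - df t * (s - t)) <= e * Rabs (s - t)) /\
  (forall t, a <= t < b -> forall e, e > 0 -> exists d, d > 0 /\
     forall s, a <= s < b -> Rabs (s - t) < d -> Rabs (df s - df t) < e).

Definition kappa (n : nat) (Om : vec -> Prop) (xs : vec) (Rr : R) : R :=
  Rsup (fun t => 0 <= t < Rr /\ forall z, ball n xs t z -> Om z).
Definition nu (df : R -> R) (Rr : R) : R :=
  Rsup (fun t => 0 <= t < Rr /\ df t < 0).
Definition rho (f df : R -> R) (Rr w1 w2 th lam : R) : R :=
  Rsup (fun d => 0 < d < nu df Rr /\
     forall t, 0 < t < d ->
       w1 * (1 + th) * (1 + lam) * (f t / (t * df t) - 1)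
       + w1 * ((1 + th) * lam + th) + w2 < 1).

(* CondG procedure: z = CondG(y, x, eps) (any choice of optimal u_t) *)
Definition CondG (n : nat) (C : vec -> Prop) (y x : vec) (eps : R) (z : vec) : Prop :=
  exists (T : nat) (zs us : nat -> vec),
    zs O = x /\ zs T = z /\
    (forall t, (t <= T)%nat ->
       C (us t) /\
       forall u, C u ->
         vdot n (vsub (zs t) y) (vsub (us t) (zs t)) <= vdot n (vsub (zs t) y) (vsub u (zs t))) /\
    (forall t, (t < T)%nat ->
       vdot n (vsub (zs t) y) (vsub (us t) (zs t)) < - eps /\
       zs (S t) = vadd (zs t)
         (vscal (Rmin 1 (- vdot n (vsub (zs t) y) (vsub (us t) (zs t))
                          / (vnorm n (vsub (us t) (zs t)))^2))
                (vsub (us t) (zs t)))) /\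
    vdot n (vsub (zs T) y) (vsub (us T) (zs T)) >= - eps.

Definition INL_CondG (n : nat) (C : vec -> Prop) (F : vec -> vec) (x0 : vec)
    (theta : nat -> R) (M : nat -> mat) (s r y x : nat -> vec) : Prop :=
  x O = x0 /\
  forall k,
    ~ veq n (F (x k)) vzero /\
    invertible n (M k) /\
    veq n (mv n (M k) (s k)) (vadd (vopp (F (x k))) (r k)) /\
    y k = vadd (x k) (s k) /\
    CondG n C (y k) (x k) (theta k * (vnorm n (s k))^2) (x (S k)).

Definition is_limsup (u : nat -> R) (l : R) : Prop :=
  forall e, e > 0 ->
    (exists N, forall k, (N <= k)%nat -> u k <= l + e) /\
    (forall N, exists k, (N <= k)%nat /\ l - e <= u k).

(* Main.v *)
From Stdlib Require Import Reals Lra Lia ClassicalEpsilon Classical FunctionalExtensionality.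
Require Import Defs.
From mathcomp Require all_boot all_algebra.
From mathcomp Require Rstruct.

Module InvMx.
Import ssreflect ssrfun ssrbool eqtype ssrnat seq choice fintype bigop ssralg matrix.

Import GRing.Theory.
Import Rstruct.
Local Open Scope ring_scope.
Section S.
Variable n : nat.
Definition Mx (A : mat) : 'M[R]_n := \matrix_(i, j) A i j.
Definition cv (x : vec) : 'cV[R]_n := \col_i x i.
Lemma rsum_big (f : nat -> R) : rsum n f = \sum_(i < n) f i.
Proof.
elim: n => [|m IH]; first by rewrite big_ord0.
by rewrite big_ord_recr /= IH.
Qed.
Lemma rsum_bigm m (f : nat -> R) : rsum m f = \sum_(i < m) f i.
Proof.
elim: m => [|m IH]; first by rewrite big_ord0.
by rewrite big_ord_recr /= IH.
Qed.
Lemma Mx_mv A x : Mx A *m cv x = cv (mv n A x).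
Proof.
apply/matrixP => i j; rewrite !mxE /mv rsum_bigm.
by apply: eq_bigr => k _; rewrite !mxE.
Qed.
Lemma Mx_mm A B : Mx A *m Mx B = Mx (mm n A B).
Proof.
apply/matrixP => i j; rewrite !mxE /mm rsum_bigm.
by apply: eq_bigr => k _; rewrite !mxE.
Qed.
Definition of_mx (B : 'M[R]_n) : mat := fun i j =>
  match insub i, insub j with Some i', Some j' => B i' j' | _, _ => 0 end.
Lemma Mx_of_mx B : Mx (of_mx B) = B.
Proof. by apply/matrixP => i j; rewrite mxE /of_mx !valK. Qed.
Lemma Mx_idm : Mx idm = 1%:M.
Proof.
apply/matrixP => i j; rewrite !mxE /idm.
case: (eqVneq i j) => [->|ne]; first by rewrite Nat.eqb_refl.
have : (nat_of_ord i <> nat_of_ord j) by move=> h; move/eqP: ne; apply; apply: ord_inj.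
by move/Nat.eqb_neq => ->.
Qed.
Lemma meq_of_Mx A B : Mx A = Mx B -> meq n A B.
Proof.
move=> h i j hi hj.
have := congr1 (fun M : 'M[R]_n => M (Ordinal (introT ltP hi)) (Ordinal (introT ltP hj))) h.
by rewrite /= !mxE.
Qed.
Lemma veq_of_cv x y : cv x = cv y -> veq n x y.
Proof.
move=> h i hi.
have := congr1 (fun M : 'cV[R]_n => M (Ordinal (introT ltP hi)) ord0) h.
by rewrite /= !mxE.
Qed.
Lemma inj_invertible (A : mat) :
  (forall x, veq n (mv n A x) vzero -> veq n x vzero) -> invertible n A.
Proof.
move=> hinj.
have hu : Mx A \in unitmx.
  rewrite -unitmx_tr unitmxE unitfE; apply/negP => /det0P [v vn0 hv].
  pose x : vec := fun j => match insub j with Some j' => v ord0 j' | None => 0 end.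
  have hcx : cv x = v^T.
    by apply/matrixP => i j; rewrite !mxE /x valK (ord1 j).
  have h0 : cv (mv n A x) = cv vzero.
    rewrite -Mx_mv hcx -(trmxK (Mx A)) -trmx_mul hv.
    by apply/matrixP => i j; rewrite !mxE.
  have hx := hinj x (veq_of_cv _ _ h0).
  move/eqP: vn0; apply; apply/matrixP => i j.
  rewrite (ord1 i) mxE.
  have := hx j (elimT ltP (ltn_ord j)).
  by rewrite /x valK.
exists (of_mx (invmx (Mx A))); split; apply: meq_of_Mx;
  rewrite -Mx_mm Mx_of_mx Mx_idm.
  by rewrite mulmxV.
by rewrite mulVmx.
Qed.
End S.
End InvMx.

Open Scope R_scope.


Lemma rsum_ext m f g : (forall i, (i < m)%nat -> f i = g i) -> rsum m f = rsum m g.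
Proof.
induction m as [|m IH]; intros H; simpl; [reflexivity|].
rewrite IH by (intros; apply H; lia). rewrite (H m) by lia. reflexivity.
Qed.
Lemma rsum_plus m f g : rsum m (fun i => f i + g i) = rsum m f + rsum m g.
Proof. induction m as [|m IH]; simpl; [lra|]. rewrite IH. ring. Qed.
Lemma rsum_minus m f g : rsum m (fun i => f i - g i) = rsum m f - rsum m g.
Proof. induction m as [|m IH]; simpl; [lra|]. rewrite IH. ring. Qed.
Lemma rsum_scal m c f : rsum m (fun i => c * f i) = c * rsum m f.
Proof. induction m as [|m IH]; simpl; [lra|]. rewrite IH. ring. Qed.
Lemma rsum_zero m : rsum m (fun _ => 0) = 0.
Proof. induction m as [|m IH]; simpl; [lra|]. rewrite IH. ring. Qed.
Lemma rsum_ge0 m f : (forall i, (i < m)%nat -> 0 <= f i) -> 0 <= rsum m f.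
Proof.
induction m as [|m IH]; intros H; simpl; [lra|].
assert (0 <= rsum m f) by (apply IH; intros; apply H; lia).
assert (0 <= f m) by (apply H; lia). lra.
Qed.
Lemma rsum_le m f g : (forall i, (i < m)%nat -> f i <= g i) -> rsum m f <= rsum m g.
Proof.
induction m as [|m IH]; intros H; simpl; [lra|].
assert (rsum m f <= rsum m g) by (apply IH; intros; apply H; lia).
assert (f m <= g m) by (apply H; lia). lra.
Qed.
Lemma rsum_swap m p (a : nat -> nat -> R) :
  rsum m (fun i => rsum p (fun j => a i j)) = rsum p (fun j => rsum m (fun i => a i j)).
Proof.
induction m as [|m IH]; simpl.
- rewrite rsum_zero. reflexivity.
- rewrite IH. rewrite <- rsum_plus. reflexivity.
Qed.
Lemma rsum_zero_each m f : (forall i, (i < m)%nat -> 0 <= f i) -> rsum m f = 0 ->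
  forall i, (i < m)%nat -> f i = 0.
Proof.
induction m as [|m IH]; intros H0 H i Hi; [lia|]. simpl in H.
assert (0 <= rsum m f) by (apply rsum_ge0; intros; apply H0; lia).
assert (0 <= f m) by (apply H0; lia).
destruct (Nat.eq_dec i m) as [->|ne]; [lra|].
apply IH; try lia; try lra. intros; apply H0; lia.
Qed.

Lemma cs_step S A B a b : S * S <= A * B -> 0 <= A -> 0 <= B ->
  (S + a * b) * (S + a * b) <= (A + a * a) * (B + b * b).
Proof.
intros H HA HB.
assert (HX : 0 <= A * (b*b) + B * (a*a)) by (apply Rplus_le_le_0_compat; apply Rmult_le_pos; nra).
assert (HY : (2 * S * a * b) * (2 * S * a * b) <= (A * (b*b) + B * (a*a)) * (A * (b*b) + B * (a*a))).
{ assert (0 <= (a*b)*(a*b)) by nra.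
  assert ((2 * S * a * b) * (2 * S * a * b) = 4 * (S*S) * ((a*b)*(a*b))) by ring.
  assert (4 * (S*S) * ((a*b)*(a*b)) <= 4 * (A*B) * ((a*b)*(a*b))) by (apply Rmult_le_compat_r; lra).
  assert ((A * (b*b) + B * (a*a)) * (A * (b*b) + B * (a*a)) - 4 * (A*B) * ((a*b)*(a*b))
          = (A*(b*b) - B*(a*a)) * (A*(b*b) - B*(a*a))) by ring.
  assert (0 <= (A*(b*b) - B*(a*a)) * (A*(b*b) - B*(a*a))) by apply Rle_0_sqr.
  lra. }
assert (2 * S * a * b <= A * (b*b) + B * (a*a)).
{ destruct (Rle_or_lt (2 * S * a * b) 0); [lra|]. nra. }
nra.
Qed.
Lemma rsum_cs m a b :
  rsum m (fun i => a i * b i) * rsum m (fun i => a i * b i)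
  <= rsum m (fun i => a i * a i) * rsum m (fun i => b i * b i).
Proof.
induction m as [|m IH]; simpl; [lra|].
apply cs_step; auto; apply rsum_ge0; intros; nra.
Qed.

Lemma vdot_ge0 n x : 0 <= vdot n x x.
Proof. apply rsum_ge0; intros; nra. Qed.
Lemma vnorm_ge0 n x : 0 <= vnorm n x.
Proof. apply sqrt_pos. Qed.
Lemma vnorm_sq n x : vnorm n x * vnorm n x = vdot n x x.
Proof. apply sqrt_sqrt, vdot_ge0. Qed.
Lemma vdot_sym n x y : vdot n x y = vdot n y x.
Proof. apply rsum_ext; intros; ring. Qed.
Lemma vdot_cs n x y : Rabs (vdot n x y) <= vnorm n x * vnorm n y.
Proof.
assert (H := rsum_cs n x y). fold (vdot n x y) in H.
change (rsum n (fun i => x i * x i)) with (vdot n x x) in H.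
change (rsum n (fun i => y i * y i)) with (vdot n y y) in H.
rewrite <- !vnorm_sq in H.
assert (0 <= vnorm n x) by apply vnorm_ge0. assert (0 <= vnorm n y) by apply vnorm_ge0.
assert (HN : 0 <= vnorm n x * vnorm n y) by nra.
assert (HV : vdot n x y * vdot n x y <= (vnorm n x * vnorm n y) * (vnorm n x * vnorm n y)) by nra.
unfold Rabs; destruct (Rcase_abs (vdot n x y)); nra.
Qed.
Lemma vdot_le n x y : vdot n x y <= vnorm n x * vnorm n y.
Proof. pose proof (vdot_cs n x y). pose proof (Rle_abs (vdot n x y)). lra. Qed.
Lemma vdot_add_l n x y z : vdot n (vadd x y) z = vdot n x z + vdot n y z.
Proof. unfold vdot, vadd. rewrite <- rsum_plus. apply rsum_ext; intros; ring. Qed.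
Lemma vdot_sub_l n x y z : vdot n (vsub x y) z = vdot n x z - vdot n y z.
Proof. unfold vdot, vsub. rewrite <- rsum_minus. apply rsum_ext; intros; ring. Qed.
Lemma vdot_add_r n x y z : vdot n z (vadd x y) = vdot n z x + vdot n z y.
Proof. unfold vdot, vadd. rewrite <- rsum_plus. apply rsum_ext; intros; ring. Qed.
Lemma vdot_sub_r n x y z : vdot n z (vsub x y) = vdot n z x - vdot n z y.
Proof. unfold vdot, vsub. rewrite <- rsum_minus. apply rsum_ext; intros; ring. Qed.
Lemma vdot_scal_r n c x y : vdot n x (vscal c y) = c * vdot n x y.
Proof. unfold vdot, vscal. rewrite <- rsum_scal. apply rsum_ext; intros; ring. Qed.
Lemma vdot_ext n x x' y y' : veq n x x' -> veq n y y' -> vdot n x y = vdot n x' y'.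
Proof. intros H1 H2. apply rsum_ext; intros i Hi. rewrite H1, H2 by exact Hi. reflexivity. Qed.
Lemma vnorm_ext n x y : veq n x y -> vnorm n x = vnorm n y.
Proof. intros H. unfold vnorm. rewrite (vdot_ext n x y x y H H). reflexivity. Qed.
Lemma vnorm_le_sq n x c : 0 <= c -> vdot n x x <= c * c -> vnorm n x <= c.
Proof.
intros Hc H. rewrite <- vnorm_sq in H. pose proof (vnorm_ge0 n x). nra.
Qed.
Lemma vnorm_add n x y : vnorm n (vadd x y) <= vnorm n x + vnorm n y.
Proof.
apply vnorm_le_sq. pose proof (vnorm_ge0 n x). pose proof (vnorm_ge0 n y). lra.
rewrite vdot_add_l, !vdot_add_r. rewrite (vdot_sym n y x).
pose proof (vdot_le n x y). rewrite <- !vnorm_sq. nra.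
Qed.
Lemma vnorm_scal n c x : vnorm n (vscal c x) = Rabs c * vnorm n x.
Proof.
unfold vnorm. replace (vdot n (vscal c x) (vscal c x)) with (Rsqr c * vdot n x x).
rewrite sqrt_mult. rewrite sqrt_Rsqr_abs. reflexivity. apply Rle_0_sqr. apply vdot_ge0.
unfold vdot, vscal, Rsqr. rewrite <- rsum_scal. apply rsum_ext; intros; ring.
Qed.
Lemma vnorm_opp n x : vnorm n (vopp x) = vnorm n x.
Proof.
replace (vopp x) with (vscal (-1) x). rewrite vnorm_scal. replace (Rabs (-1)) with 1. ring.
rewrite Rabs_left by lra. ring.
apply functional_extensionality; intro i; unfold vopp, vscal; ring.
Qed.
Lemma vnorm_sub n x y : vnorm n (vsub x y) <= vnorm n x + vnorm n y.
Proof.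
replace (vsub x y) with (vadd x (vopp y)). rewrite <- (vnorm_opp n y). apply vnorm_add.
apply functional_extensionality; intro i; unfold vopp, vsub, vadd; ring.
Qed.
Lemma vnorm_sym n x y : vnorm n (vsub x y) = vnorm n (vsub y x).
Proof.
replace (vsub x y) with (vopp (vsub y x)). apply vnorm_opp.
apply functional_extensionality; intro i; unfold vopp, vsub; ring.
Qed.
Lemma vnorm_zero n x : vnorm n x = 0 -> veq n x vzero.
Proof.
intros H i Hi. unfold vzero.
assert (vdot n x x = 0) by (rewrite <- vnorm_sq, H; ring).
assert (x i * x i = 0) by (apply (rsum_zero_each n (fun i => x i * x i)); auto; intros; nra).
nra.
Qed.
Lemma vnorm_vzero n : vnorm n vzero = 0.
Proof. unfold vnorm, vdot, vzero.
replace (rsum n (fun i => 0 * 0)) with 0. apply sqrt_0.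
transitivity (rsum n (fun _ => 0)). symmetry; apply rsum_zero. apply rsum_ext; intros; ring. Qed.

Lemma mv_ext n A x y : veq n x y -> mv n A x = mv n A y.
Proof. intros H. apply functional_extensionality; intro i. apply rsum_ext; intros j Hj. rewrite H; auto. Qed.
Lemma mv_add n A x y : mv n A (vadd x y) = vadd (mv n A x) (mv n A y).
Proof. apply functional_extensionality; intro i. unfold mv, vadd. rewrite <- rsum_plus. apply rsum_ext; intros; ring. Qed.
Lemma mv_sub n A x y : mv n A (vsub x y) = vsub (mv n A x) (mv n A y).
Proof. apply functional_extensionality; intro i. unfold mv, vsub. rewrite <- rsum_minus. apply rsum_ext; intros; ring. Qed.
Lemma mv_scal n A c x : mv n A (vscal c x) = vscal c (mv n A x).
Proof. apply functional_extensionality; intro i. unfold mv, vscal. rewrite <- rsum_scal. apply rsum_ext; intros; ring. Qed.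
Lemma mv_opp n A x : mv n A (vopp x) = vopp (mv n A x).
Proof. apply functional_extensionality; intro i. unfold mv, vopp.
replace (- rsum n (fun j => A i j * x j)) with ((-1) * rsum n (fun j => A i j * x j)) by ring.
rewrite <- rsum_scal. apply rsum_ext; intros; ring. Qed.
Lemma mv_msub n A B x : mv n (msub A B) x = vsub (mv n A x) (mv n B x).
Proof. apply functional_extensionality; intro i. unfold mv, msub, vsub. rewrite <- rsum_minus. apply rsum_ext; intros; ring. Qed.
Lemma mv_mm n A B x : mv n (mm n A B) x = mv n A (mv n B x).
Proof.
apply functional_extensionality; intro i. unfold mv, mm.
transitivity (rsum n (fun j => rsum n (fun l => A i l * B l j * x j))).
apply rsum_ext; intros. rewrite Rmult_comm, <- rsum_scal. apply rsum_ext; intros; ring.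
rewrite rsum_swap. apply rsum_ext; intros. rewrite <- rsum_scal. apply rsum_ext; intros; ring.
Qed.
Lemma mv_meq n A B x : meq n A B -> veq n (mv n A x) (mv n B x).
Proof. intros H i Hi. apply rsum_ext; intros j Hj. rewrite H; auto. Qed.
Lemma mv_idm n x : veq n (mv n idm x) x.
Proof.
intros i Hi. unfold mv, idm.
assert (forall m, rsum m (fun j => (if Nat.eqb i j then 1 else 0) * x j) = if Nat.ltb i m then x i else 0).
{ induction m as [|m IH]; simpl; [reflexivity|]. rewrite IH.
  destruct (Nat.eqb_spec i m) as [->|ne].
  - rewrite (proj2 (Nat.ltb_ge m m)) by lia. rewrite (proj2 (Nat.ltb_lt m (S m))) by lia. ring.
  - destruct (Nat.ltb_spec i m); destruct (Nat.ltb_spec i (S m)); try lia; ring. }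
rewrite H. rewrite (proj2 (Nat.ltb_lt i n)) by exact Hi. reflexivity.
Qed.
Lemma vnorm_mv_ext n A B x : meq n A B -> vnorm n (mv n A x) = vnorm n (mv n B x).
Proof. intros; apply vnorm_ext, mv_meq; auto. Qed.

Lemma Rsup_lub E : (exists x, E x) -> (exists M, forall x, E x -> x <= M) -> is_lub E (Rsup E).
Proof.
intros Hne Hb. unfold Rsup. apply epsilon_spec.
destruct (completeness E Hb Hne) as [m Hm]. exists m; exact Hm.
Qed.

Lemma mv_bound n A : exists K, 0 <= K /\ forall x, vnorm n (mv n A x) <= K * vnorm n x.
Proof.
set (S := rsum n (fun i => rsum n (fun j => A i j * A i j))).
assert (HS : 0 <= S) by (apply rsum_ge0; intros; apply rsum_ge0; intros; nra).
exists (sqrt S). split. apply sqrt_pos.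
intros x. unfold vnorm. rewrite <- sqrt_mult by (auto; apply vdot_ge0).
apply sqrt_le_1. apply vdot_ge0. apply Rmult_le_pos; [exact HS| apply vdot_ge0].
unfold S. rewrite Rmult_comm, <- rsum_scal. unfold vdot at 1. unfold mv. apply rsum_le. intros i Hi.
pose proof (rsum_cs n (fun j => A i j) x) as Hc. simpl in Hc.
unfold vdot. lra.
Qed.
Lemma opnorm_lub n A : is_lub (fun c => exists x, vnorm n x <= 1 /\ c = vnorm n (mv n A x)) (opnorm n A).
Proof.
apply Rsup_lub. exists (vnorm n (mv n A vzero)), vzero. rewrite vnorm_vzero. split; [lra|reflexivity].
destruct (mv_bound n A) as [K [HK H]]. exists K. intros c [x [Hx ->]].
specialize (H x). pose proof (vnorm_ge0 n x). nra.
Qed.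
Lemma opnorm_ge0 n A : 0 <= opnorm n A.
Proof.
destruct (opnorm_lub n A) as [H _]. apply (Rle_trans _ (vnorm n (mv n A vzero))).
apply vnorm_ge0. apply H. exists vzero. rewrite vnorm_vzero. split; [lra|reflexivity].
Qed.
Lemma opnorm_bound n A x : vnorm n (mv n A x) <= opnorm n A * vnorm n x.
Proof.
destruct (opnorm_lub n A) as [H _].
destruct (Req_dec (vnorm n x) 0) as [H0|H0].
- destruct (mv_bound n A) as [K [HK HB]]. specialize (HB x). rewrite H0 in *.
  pose proof (vnorm_ge0 n (mv n A x)). nra.
- pose proof (vnorm_ge0 n x).
  assert (Hp : 0 < vnorm n x) by lra.
  assert (Hin := H (vnorm n (mv n A (vscal (/ vnorm n x) x)))).
  rewrite mv_scal, vnorm_scal, Rabs_right in Hin by (left; apply Rinv_0_lt_compat; lra).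
  assert (/ vnorm n x * vnorm n (mv n A x) <= opnorm n A).
  { apply Hin. exists (vscal (/ vnorm n x) x). rewrite vnorm_scal, mv_scal, vnorm_scal.
    rewrite Rabs_right by (left; apply Rinv_0_lt_compat; lra). split; [|reflexivity].
    rewrite Rinv_l by lra. lra. }
  apply (Rmult_le_compat_l (vnorm n x)) in H2; [|lra].
  rewrite <- Rmult_assoc, Rinv_r, Rmult_1_l in H2 by lra. lra.
Qed.

Lemma mat_inv_spec n A : invertible n A -> is_inverse n A (mat_inv n A).
Proof. intros H. unfold mat_inv. apply epsilon_spec. exact H. Qed.
Lemma inv_r n A B x : is_inverse n A B -> veq n (mv n A (mv n B x)) x.
Proof.
intros [H1 _] i Hi. rewrite <- mv_mm. rewrite (mv_meq n _ _ x H1 i Hi). apply mv_idm; auto.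
Qed.
Lemma inv_l n A B x : is_inverse n A B -> veq n (mv n B (mv n A x)) x.
Proof.
intros [_ H1] i Hi. rewrite <- mv_mm. rewrite (mv_meq n _ _ x H1 i Hi). apply mv_idm; auto.
Qed.
Lemma inj_invertible n A : (forall x, veq n (mv n A x) vzero -> veq n x vzero) -> invertible n A.
Proof. apply InvMx.inj_invertible. Qed.


Lemma Rabs_le_between a b : Rabs a <= b -> -b <= a <= b.
Proof. unfold Rabs; destruct (Rcase_abs a); lra. Qed.

Lemma decr01 (psi dpsi : R -> R) :
  (forall t, 0 <= t <= 1 -> dpsi t <= 0) ->
  (forall t, 0 <= t <= 1 -> forall e, e > 0 -> exists d, d > 0 /\
     forall s, 0 <= s <= 1 -> Rabs (s - t) < d ->
       Rabs (psi s - psi t - dpsi t * (s - t)) <= e * Rabs (s - t)) ->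
  psi 1 <= psi 0.
Proof.
intros Hd Hdiff. apply Rnot_lt_le; intro Hlt.
set (e := (psi 1 - psi 0) / 2).
assert (He : e > 0) by (unfold e; lra).
set (E := fun s => 0 <= s <= 1 /\ forall r, 0 <= r <= s -> psi r <= psi 0 + e * r).
assert (HE0 : E 0). { split; [lra|]. intros r Hr. replace r with 0 by lra. lra. }
assert (Hlub : is_lub E (Rsup E)).
{ apply Rsup_lub. exists 0; exact HE0. exists 1. intros x [Hx _]. lra. }
set (c := Rsup E) in *.
destruct Hlub as [Hub Hleast].
assert (Hc0 : 0 <= c) by (apply Hub; exact HE0).
assert (Hc1 : c <= 1) by (apply Hleast; intros x [Hx _]; lra).
assert (HA : forall r, 0 <= r < c -> psi r <= psi 0 + e * r).
{ intros r Hr. destruct (classic (exists s, E s /\ r < s)) as [[s [[Hs1 Hs2] Hrs]]|Hno].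
  - apply Hs2. lra.
  - exfalso. assert (c <= r). { apply Hleast. intros x Hx. apply Rnot_lt_le. intro. apply Hno. exists x; auto. }
    lra. }
assert (HB : psi c <= psi 0 + e * c).
{ destruct (Req_dec c 0) as [->|Hcn0]; [lra|].
  destruct (Hdiff c (conj Hc0 Hc1) e He) as [d [Hdp Hd2]].
  set (s := c - Rmin c d / 2).
  assert (Hmin1 : Rmin c d <= c) by apply Rmin_l. assert (Hmin2 : Rmin c d <= d) by apply Rmin_r.
  assert (Hmin0 : 0 < Rmin c d) by (apply Rmin_glb_lt; lra).
  assert (Hs : 0 <= s < c) by (unfold s; lra).
  assert (Habs : Rabs (s - c) = c - s) by (rewrite Rabs_left by lra; ring).
  specialize (Hd2 s ltac:(lra) ltac:(rewrite Habs; unfold s; lra)).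
  rewrite Habs in Hd2. specialize (HA s Hs). specialize (Hd c (conj Hc0 Hc1)).
  apply Rabs_le_between in Hd2 as [Hd2 _].
  assert (dpsi c * (c - s) <= 0) by nra.
  nra. }
assert (HC : c = 1).
{ destruct (Req_dec c 1) as [|Hne]; auto. exfalso.
  destruct (Hdiff c (conj Hc0 Hc1) e He) as [d [Hdp Hd2]].
  set (s := c + Rmin (1 - c) d / 2).
  assert (Hmin1 : Rmin (1-c) d <= 1 - c) by apply Rmin_l. assert (Hmin2 : Rmin (1-c) d <= d) by apply Rmin_r.
  assert (Hmin0 : 0 < Rmin (1-c) d) by (apply Rmin_glb_lt; lra).
  assert (HEs : E s).
  { split; [unfold s; lra|]. intros r Hr.
    destruct (Rlt_or_le r c) as [Hrc|Hrc]. apply HA; lra.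
    destruct (Req_dec r c) as [->|Hrc2]. exact HB.
    assert (Habs : Rabs (r - c) = r - c) by (rewrite Rabs_right by lra; ring).
    specialize (Hd2 r ltac:(unfold s in Hr; lra) ltac:(rewrite Habs; unfold s in Hr; lra)).
    rewrite Habs in Hd2. apply Rabs_le_between in Hd2 as [_ Hd2].
    specialize (Hd c (conj Hc0 Hc1)).
    assert (dpsi c * (r - c) <= 0) by nra.
    nra. }
  specialize (Hub s HEs). unfold s in Hub. lra. }
rewrite HC in HB. unfold e in HB. lra.
Qed.


Lemma kappa_lub n Om xs Rr : Rr > 0 ->
  is_lub (fun t => 0 <= t < Rr /\ forall z, ball n xs t z -> Om z) (kappa n Om xs Rr).
Proof.
intros HR. apply Rsup_lub.
- exists 0. split; [lra|]. intros z Hz. unfold ball in Hz. pose proof (vnorm_ge0 n (vsub z xs)). lra.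
- exists Rr. intros t [Ht _]. lra.
Qed.
Lemma kappa_le n Om xs Rr : Rr > 0 -> kappa n Om xs Rr <= Rr.
Proof. intros HR. destruct (kappa_lub n Om xs Rr HR) as [_ H]. apply H. intros t [Ht _]. lra. Qed.
Lemma kappa_ball n Om xs Rr z : Rr > 0 -> ball n xs (kappa n Om xs Rr) z -> Om z.
Proof.
intros HR Hz. destruct (kappa_lub n Om xs Rr HR) as [H1 H2].
destruct (classic (exists t, (0 <= t < Rr /\ forall z, ball n xs t z -> Om z) /\ vnorm n (vsub z xs) < t))
  as [[t [[_ Ht] Hlt]]|Hno].
- apply Ht. exact Hlt.
- exfalso. assert (kappa n Om xs Rr <= vnorm n (vsub z xs)).
  { apply H2. intros t Ht. apply Rnot_lt_le. intro. apply Hno. exists t; auto. }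
  unfold ball in Hz. lra.
Qed.

Section FSec.
Variables (f df : R -> R) (Rr : R).
Hypothesis HR : Rr > 0.
Hypothesis Hf : C1_interval f df 0 Rr.
Hypothesis Hh1 : f 0 = 0 /\ df 0 = -1.
Hypothesis Hh2 : forall a b, 0 <= a -> a < b -> b < Rr -> df a < df b.

Lemma nu_lub : is_lub (fun t => 0 <= t < Rr /\ df t < 0) (nu df Rr).
Proof.
apply Rsup_lub. exists 0. split; [lra|]. destruct Hh1; lra.
exists Rr. intros t [Ht _]; lra.
Qed.
Lemma nu_le : nu df Rr <= Rr.
Proof. destruct nu_lub as [_ H]. apply H. intros t [Ht _]; lra. Qed.
Lemma df_neg t : 0 <= t < nu df Rr -> df t < 0.
Proof.
intros Ht. destruct nu_lub as [H1 H2].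
destruct (classic (exists s, (0 <= s < Rr /\ df s < 0) /\ t < s)) as [[s [[Hs1 Hs2] Hts]]|Hno].
- assert (df t < df s) by (apply Hh2; lra). lra.
- exfalso. assert (nu df Rr <= t). { apply H2. intros s Hs. apply Rnot_lt_le. intro. apply Hno. exists s; auto. }
  lra.
Qed.

Lemma near0 e : e > 0 -> exists d, d > 0 /\ d <= Rr /\ forall t, 0 < t < d ->
  df t < 0 /\ f t / (t * df t) - 1 <= e.
Proof.
intros He. set (e' := Rmin (1/2) (e/4)).
assert (He'1 : e' <= 1/2) by apply Rmin_l. assert (He'2 : e' <= e/4) by apply Rmin_r.
assert (He'0 : 0 < e') by (apply Rmin_glb_lt; lra).
destruct Hf as [Hd Hc]. destruct Hh1 as [Hf0 Hdf0].
destruct (Hd 0 ltac:(lra) e' He'0) as [d1 [Hd1 H1]].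
destruct (Hc 0 ltac:(lra) e' He'0) as [d2 [Hd2 H2]].
exists (Rmin Rr (Rmin d1 d2)). split; [apply Rmin_glb_lt; [lra|apply Rmin_glb_lt; lra]|].
split; [apply Rmin_l|].
intros t Ht.
assert (Hm1 : Rmin Rr (Rmin d1 d2) <= Rr) by apply Rmin_l.
assert (Hm2 : Rmin Rr (Rmin d1 d2) <= Rmin d1 d2) by apply Rmin_r.
assert (Hm3 : Rmin d1 d2 <= d1) by apply Rmin_l. assert (Hm4 : Rmin d1 d2 <= d2) by apply Rmin_r.
assert (Habs : Rabs (t - 0) = t) by (rewrite Rminus_0_r, Rabs_right; lra).
specialize (H1 t ltac:(lra) ltac:(rewrite Habs; lra)).
specialize (H2 t ltac:(lra) ltac:(rewrite Habs; lra)).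
rewrite Habs, Hf0, Hdf0 in H1. rewrite Hdf0 in H2.
apply Rabs_le_between in H1. apply Rabs_def2 in H2.
assert (Hdn : df t < 0) by lra. split; [exact Hdn|].
assert (Hden : t * df t < 0) by nra.
replace (f t / (t * df t) - 1) with ((f t - t * df t) / (t * df t)) by (field; lra).
apply (Rmult_le_reg_r (- (t * df t))); [lra|].
replace ((f t - t * df t) / (t * df t) * - (t * df t)) with (- (f t - t * df t)) by (field; lra).
nra.
Qed.

Lemma nu_pos : 0 < nu df Rr.
Proof.
destruct (near0 1 ltac:(lra)) as [d [Hd [HdR H]]].
destruct nu_lub as [H1 _].
apply (Rlt_le_trans _ (d/2)); [lra|]. apply H1. split; [lra|]. apply (H (d/2)). lra.
Qed.

Section RhoSec.
Variables (w1 w2 th lam : R).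
Hypothesis Hth : 0 <= th < 1.
Hypothesis Hw : 0 <= w2 < w1.
Hypothesis Hlam : 0 <= lam < (1 - w2 - w1 * th) / (w1 * (1 + th)).

Lemma c_lt1 : w1 * ((1 + th) * lam + th) + w2 < 1.
Proof.
destruct Hlam as [_ H]. assert (Hp : 0 < w1 * (1 + th)) by nra.
apply (Rmult_lt_compat_r (w1 * (1 + th))) in H; [|exact Hp].
replace ((1 - w2 - w1 * th) / (w1 * (1 + th)) * (w1 * (1 + th))) with (1 - w2 - w1 * th) in H by (field; lra).
nra.
Qed.

Definition rhoset := fun d => 0 < d < nu df Rr /\
     forall t, 0 < t < d ->
       w1 * (1 + th) * (1 + lam) * (f t / (t * df t) - 1)
       + w1 * ((1 + th) * lam + th) + w2 < 1.

Lemma rho_lub : is_lub rhoset (rho f df Rr w1 w2 th lam).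
Proof.
apply Rsup_lub.
- set (K := w1 * (1 + th) * (1 + lam)). set (c := w1 * ((1 + th) * lam + th) + w2).
  assert (HK : 0 < K) by (unfold K; destruct Hlam; apply Rmult_lt_0_compat; [apply Rmult_lt_0_compat|]; lra).
  assert (Hc := c_lt1). fold c in Hc.
  destruct (near0 ((1 - c) / (2 * K))) as [d [Hd [HdR H]]].
  { apply Rdiv_lt_0_compat; lra. }
  pose proof nu_pos as Hnu.
  exists (Rmin d (nu df Rr) / 2). split.
  + assert (0 < Rmin d (nu df Rr)) by (apply Rmin_glb_lt; lra).
    assert (Rmin d (nu df Rr) <= nu df Rr) by apply Rmin_r. lra.
  + intros t Ht. assert (Rmin d (nu df Rr) <= d) by apply Rmin_l.
    destruct (H t ltac:(lra)) as [_ Hle]. fold K c.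
    apply (Rmult_le_compat_l K) in Hle; [|lra].
    replace (K * ((1 - c) / (2 * K))) with ((1 - c) / 2) in Hle by (field; lra). unfold c in *. lra.
- exists (nu df Rr). intros d [[_ Hd] _]. lra.
Qed.

Lemma rho_le_nu : rho f df Rr w1 w2 th lam <= nu df Rr.
Proof. destruct rho_lub as [_ H]. apply H. intros d [[_ Hd] _]. lra. Qed.

Lemma rho_delta t0 : t0 < rho f df Rr w1 w2 th lam -> exists d, t0 < d /\ rhoset d.
Proof.
intros Ht. destruct rho_lub as [H1 H2].
destruct (classic (exists d, rhoset d /\ t0 < d)) as [[d [Hd Hlt]]|Hno].
- exists d; auto.
- exfalso. assert (rho f df Rr w1 w2 th lam <= t0).
  { apply H2. intros s Hs. apply Rnot_lt_le. intro. apply Hno. exists s; auto. }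
  lra.
Qed.
End RhoSec.
End FSec.


Section Maj.
Variables (n : nat) (Om : vec -> Prop) (F : vec -> vec) (DF : vec -> mat) (xs : vec) (Rr : R) (f df : R -> R).
Hypothesis HR : Rr > 0.
Hypothesis HF : C1_map n Om F DF.
Hypothesis Hf : C1_interval f df 0 Rr.
Hypothesis Hh1 : f 0 = 0 /\ df 0 = -1.
Hypothesis Hh2 : forall a b, 0 <= a -> a < b -> b < Rr -> df a < df b.
Hypothesis HDFxs : invertible n (DF xs).
Hypothesis Hmaj : forall tau z, 0 <= tau <= 1 -> ball n xs (kappa n Om xs Rr) z ->
     opnorm n (mm n (mat_inv n (DF xs))
                 (msub (DF z) (DF (vadd xs (vscal tau (vsub z xs))))))
     <= df (vnorm n (vsub z xs)) - df (tau * vnorm n (vsub z xs)).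

Definition pth (x : vec) (tau : R) : vec := vadd xs (vscal tau (vsub x xs)).
Lemma pth_sub x tau : vsub (pth x tau) xs = vscal tau (vsub x xs).
Proof. apply functional_extensionality; intro i; unfold pth, vsub, vadd, vscal; ring. Qed.
Lemma pth_norm x tau : vnorm n (vsub (pth x tau) xs) = Rabs tau * vnorm n (vsub x xs).
Proof. rewrite pth_sub. apply vnorm_scal. Qed.
Lemma pth_shift x tau s : vadd (pth x tau) (vscal (s - tau) (vsub x xs)) = pth x s.
Proof. apply functional_extensionality; intro i; unfold pth, vsub, vadd, vscal; ring. Qed.
Lemma pth1 x : pth x 1 = x.
Proof. apply functional_extensionality; intro i; unfold pth, vsub, vadd, vscal; ring. Qed.
Lemma pth0 x : pth x 0 = xs.
Proof. apply functional_extensionality; intro i; unfold pth, vsub, vadd, vscal; ring. Qed.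

Lemma vdot_abs_le w v : - vdot n w v <= vnorm n w * vnorm n v.
Proof. pose proof (vdot_cs n w v). pose proof (Rle_abs (- vdot n w v)). rewrite Rabs_Ropp in H0. lra. Qed.

Lemma maj_dot x w K : ball n xs (kappa n Om xs Rr) x -> vnorm n w <= K ->
  vdot n w (mv n (mat_inv n (DF xs)) (vsub (vsub (F x) (F xs)) (mv n (DF x) (vsub x xs))))
  <= K * (df (vnorm n (vsub x xs)) * vnorm n (vsub x xs) - f (vnorm n (vsub x xs))).
Proof.
intros Hx HwK.
set (G := mat_inv n (DF xs)). set (d := vsub x xs). set (t := vnorm n d).
set (D := DF x).
assert (Ht0 : 0 <= t) by apply vnorm_ge0.
assert (Htk : t < kappa n Om xs Rr) by exact Hx.
assert (HtR : t < Rr) by (pose proof (kappa_le n Om xs Rr HR); lra).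
assert (HK0 : 0 <= K) by (pose proof (vnorm_ge0 n w); lra).
assert (Hpin : forall s, 0 <= s <= 1 -> ball n xs (kappa n Om xs Rr) (pth x s) /\ Om (pth x s)).
{ intros s Hs. assert (Hb : ball n xs (kappa n Om xs Rr) (pth x s)).
  { unfold ball. rewrite pth_norm. fold d t. rewrite Rabs_right by lra.
    apply (Rle_lt_trans _ t); [nra|exact Htk]. }
  split; [exact Hb|]. apply (kappa_ball n Om xs Rr); auto. }
set (a := vdot n w (mv n G (mv n D d))).
set (psi := fun tau => vdot n w (mv n G (F (pth x tau))) - tau * a - K * (df t * tau * t - f (tau * t))).
set (dpsi := fun tau => vdot n w (mv n G (mv n (DF (pth x tau)) d)) - a - K * (df t * t - df (tau * t) * t)).
assert (Hdec : psi 1 <= psi 0).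
{ apply (decr01 psi dpsi).
  - intros tau Htau. unfold dpsi.
    specialize (Hmaj tau x Htau Hx). fold G t D in Hmaj. fold (pth x tau) in Hmaj.
    set (Dp := DF (pth x tau)) in *.
    assert (Heq : vdot n w (mv n G (mv n Dp d)) - a = - vdot n w (mv n (mm n G (msub D Dp)) d)).
    { unfold a. rewrite mv_mm, mv_msub, mv_sub, vdot_sub_r. ring. }
    rewrite Heq.
    pose proof (vdot_abs_le w (mv n (mm n G (msub D Dp)) d)) as H1.
    pose proof (opnorm_bound n (mm n G (msub D Dp)) d) as H2. fold t in H2.
    pose proof (vnorm_ge0 n w). pose proof (vnorm_ge0 n (mv n (mm n G (msub D Dp)) d)).
    pose proof (opnorm_ge0 n (mm n G (msub D Dp))).
    assert (Hdd : 0 <= df t - df (tau * t)).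
    { destruct (Req_dec (tau * t) t) as [He|He]. rewrite He; lra.
      left. assert (tau * t <= t) by nra. apply Rlt_0_minus, Hh2; nra. }
    assert (vnorm n w * vnorm n (mv n (mm n G (msub D Dp)) d) <= K * ((df t - df (tau * t)) * t)).
    { apply Rmult_le_compat; auto. apply (Rle_trans _ _ _ H2). apply Rmult_le_compat_r; auto. }
    nra.
  - intros tau Htau e He.
    set (Lw := vnorm n w * opnorm n G).
    assert (HLw : 0 <= Lw) by (unfold Lw; apply Rmult_le_pos; [apply vnorm_ge0|apply opnorm_ge0]).
    set (e1 := e / (2 * (Lw * t + 1))). set (e2 := e / (2 * (K * t + 1))).
    assert (He1 : e1 > 0) by (unfold e1; apply Rdiv_lt_0_compat; nra).
    assert (He2 : e2 > 0) by (unfold e2; apply Rdiv_lt_0_compat; nra).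
    destruct (Hpin tau Htau) as [_ HOmt].
    destruct HF as [HF1 _]. destruct (HF1 (pth x tau) HOmt e1 He1) as [d1 [Hd1 H1]].
    destruct Hf as [Hf1 _]. destruct (Hf1 (tau * t) ltac:(nra) e2 He2) as [d2 [Hd2 H2]].
    exists (Rmin (d1 / (t + 1)) (d2 / (t + 1))).
    assert (Hq1 : d1 / (t + 1) > 0) by (apply Rdiv_lt_0_compat; lra).
    assert (Hq2 : d2 / (t + 1) > 0) by (apply Rdiv_lt_0_compat; lra).
    split; [apply Rmin_glb_lt; lra|].
    intros s Hs Hst.
    assert (Hm1 : Rmin (d1 / (t + 1)) (d2 / (t + 1)) <= d1 / (t + 1)) by apply Rmin_l.
    assert (Hm2 : Rmin (d1 / (t + 1)) (d2 / (t + 1)) <= d2 / (t + 1)) by apply Rmin_r.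
    set (r := Rabs (s - tau)) in *.
    assert (Hr0 : 0 <= r) by apply Rabs_pos.
    assert (Hrt1 : r * t < d1).
    { assert (r * (t + 1) < d1). { apply (Rmult_lt_reg_r (/ (t+1))). apply Rinv_0_lt_compat; lra.
        replace (r * (t + 1) * / (t + 1)) with r by (field; lra). unfold Rdiv in Hm1. lra. }
      nra. }
    assert (Hrt2 : r * t < d2).
    { assert (r * (t + 1) < d2). { apply (Rmult_lt_reg_r (/ (t+1))). apply Rinv_0_lt_compat; lra.
        replace (r * (t + 1) * / (t + 1)) with r by (field; lra). unfold Rdiv in Hm2. lra. }
      nra. }
    set (h := vscal (s - tau) d).
    assert (Hh : vnorm n h = r * t) by (unfold h; rewrite vnorm_scal; reflexivity).
    assert (HOms : Om (vadd (pth x tau) h)) by (unfold h, d; rewrite pth_shift; apply Hpin; auto).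
    specialize (H1 h ltac:(lra) HOms). rewrite Hh in H1.
    unfold h, d in H1. rewrite pth_shift in H1. fold d in H1.
    set (errF := vsub (vsub (F (pth x s)) (F (pth x tau))) (mv n (DF (pth x tau)) (vscal (s - tau) d))) in H1.
    assert (HF_est : Rabs (vdot n w (mv n G errF)) <= Lw * (e1 * (r * t))).
    { apply (Rle_trans _ _ _ (vdot_cs n w (mv n G errF))). unfold Lw. rewrite Rmult_assoc.
      apply Rmult_le_compat_l; [apply vnorm_ge0|].
      apply (Rle_trans _ _ _ (opnorm_bound n G errF)). apply Rmult_le_compat_l; [apply opnorm_ge0|exact H1]. }
    assert (Hst2 : Rabs (s * t - tau * t) < d2).
    { replace (s * t - tau * t) with ((s - tau) * t) by ring. rewrite Rabs_mult, (Rabs_right t) by lra. exact Hrt2. }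
    specialize (H2 (s * t) ltac:(nra) Hst2).
    replace (Rabs (s * t - tau * t)) with (r * t) in H2 by
      (replace (s * t - tau * t) with ((s - tau) * t) by ring; rewrite Rabs_mult, (Rabs_right t) by lra; reflexivity).
    assert (Hexp : psi s - psi tau - dpsi tau * (s - tau) =
       vdot n w (mv n G errF) + K * (f (s * t) - f (tau * t) - df (tau * t) * (s * t - tau * t))).
    { unfold psi, dpsi, errF. rewrite !mv_sub, !vdot_sub_r, mv_scal, mv_scal, vdot_scal_r. ring. }
    rewrite Hexp.
    apply (Rle_trans _ _ _ (Rabs_triang _ _)). rewrite Rabs_mult, (Rabs_right K) by lra.
    assert (K * Rabs (f (s * t) - f (tau * t) - df (tau * t) * (s * t - tau * t)) <= K * (e2 * (r * t))).
    { apply Rmult_le_compat_l; auto. }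
    assert (Lw * (e1 * (r * t)) <= e / 2 * r).
    { unfold e1. replace (Lw * (e / (2 * (Lw * t + 1)) * (r * t))) with (e / 2 * r * (Lw * t / (Lw * t + 1))) by (field; nra).
      assert (Lw * t / (Lw * t + 1) <= 1). { apply (Rmult_le_reg_r (Lw * t + 1)). nra.
        replace (Lw * t / (Lw * t + 1) * (Lw * t + 1)) with (Lw * t) by (field; nra). lra. }
      assert (0 <= e / 2 * r) by nra. nra. }
    assert (K * (e2 * (r * t)) <= e / 2 * r).
    { unfold e2. replace (K * (e / (2 * (K * t + 1)) * (r * t))) with (e / 2 * r * (K * t / (K * t + 1))) by (field; nra).
      assert (K * t / (K * t + 1) <= 1). { apply (Rmult_le_reg_r (K * t + 1)). nra.
        replace (K * t / (K * t + 1) * (K * t + 1)) with (K * t) by (field; nra). lra. }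
      assert (0 <= e / 2 * r) by nra. nra. }
    lra. }
unfold psi in Hdec. rewrite pth1, pth0 in Hdec.
destruct Hh1 as [Hf0 _].
replace (0 * t) with 0 in Hdec by ring. replace (1 * t) with t in Hdec by ring. rewrite Hf0 in Hdec.
rewrite !mv_sub, !vdot_sub_r. unfold a in Hdec. fold D d. lra.
Qed.

Lemma ef_nonneg x : ball n xs (kappa n Om xs Rr) x ->
  0 <= df (vnorm n (vsub x xs)) * vnorm n (vsub x xs) - f (vnorm n (vsub x xs)).
Proof.
intros Hx. pose proof (maj_dot x vzero 1 Hx ltac:(rewrite vnorm_vzero; lra)) as H.
replace (vdot n vzero _) with 0 in H. lra.
unfold vdot, vzero. transitivity (rsum n (fun _ => 0)). symmetry; apply rsum_zero. apply rsum_ext; intros; ring.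
Qed.

Lemma maj_norm x : ball n xs (kappa n Om xs Rr) x ->
  vnorm n (mv n (mat_inv n (DF xs)) (vsub (vsub (F x) (F xs)) (mv n (DF x) (vsub x xs))))
  <= df (vnorm n (vsub x xs)) * vnorm n (vsub x xs) - f (vnorm n (vsub x xs)).
Proof.
intros Hx. set (w := mv n (mat_inv n (DF xs)) (vsub (vsub (F x) (F xs)) (mv n (DF x) (vsub x xs)))).
pose proof (maj_dot x w (vnorm n w) Hx (Rle_refl _)) as H. fold w in H.
rewrite <- vnorm_sq in H. pose proof (ef_nonneg x Hx). pose proof (vnorm_ge0 n w).
set (E := df (vnorm n (vsub x xs)) * vnorm n (vsub x xs) - f (vnorm n (vsub x xs))) in *.
destruct (Req_dec (vnorm n w) 0) as [Hw0|Hw0]. lra.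
apply (Rmult_le_reg_l (vnorm n w)). lra. lra.
Qed.

Lemma maj_lower x v : ball n xs (kappa n Om xs Rr) x ->
  - df (vnorm n (vsub x xs)) * vnorm n v <= vnorm n (mv n (mat_inv n (DF xs)) (mv n (DF x) v)).
Proof.
intros Hx. pose proof (Hmaj 0 x ltac:(lra) Hx) as H.
replace (vadd xs (vscal 0 (vsub x xs))) with xs in H by
  (apply functional_extensionality; intro i; unfold vadd, vscal, vsub; ring).
replace (0 * vnorm n (vsub x xs)) with 0 in H by ring.
destruct Hh1 as [_ Hd0]. rewrite Hd0 in H.
set (G := mat_inv n (DF xs)) in *.
pose proof (opnorm_bound n (mm n G (msub (DF x) (DF xs))) v) as H2.
rewrite mv_mm, mv_msub, mv_sub in H2.
assert (Hinv := inv_l n (DF xs) G v (mat_inv_spec n (DF xs) HDFxs)).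
assert (Hv : vnorm n v <= vnorm n (mv n G (mv n (DF x) v)) + vnorm n (vsub (mv n G (mv n (DF x) v)) (mv n G (mv n (DF xs) v)))).
{ rewrite <- (vnorm_ext n (vsub (mv n G (mv n (DF x) v)) (vsub (mv n G (mv n (DF x) v)) (mv n G (mv n (DF xs) v)))) v).
  apply vnorm_sub. intros i Hi. unfold vsub. rewrite Hinv by exact Hi. ring. }
pose proof (opnorm_ge0 n (mm n G (msub (DF x) (DF xs)))). pose proof (vnorm_ge0 n v).
assert (opnorm n (mm n G (msub (DF x) (DF xs))) * vnorm n v <= (df (vnorm n (vsub x xs)) - -1) * vnorm n v)
  by (apply Rmult_le_compat_r; lra).
lra.
Qed.

Lemma u_bound x Di : ball n xs (kappa n Om xs Rr) x -> df (vnorm n (vsub x xs)) < 0 ->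
  veq n (F xs) vzero -> is_inverse n (DF x) Di ->
  vnorm n (mv n Di (vsub (F x) (mv n (DF x) (vsub x xs))))
  <= f (vnorm n (vsub x xs)) / df (vnorm n (vsub x xs)) - vnorm n (vsub x xs).
Proof.
intros Hx Hneg HFxs HDi.
set (t := vnorm n (vsub x xs)) in *.
set (u := mv n Di (vsub (F x) (mv n (DF x) (vsub x xs)))).
pose proof (maj_lower x u Hx) as H1. fold t in H1.
pose proof (maj_norm x Hx) as H2. fold t in H2.
assert (Heq : mv n (mat_inv n (DF xs)) (mv n (DF x) u) =
    mv n (mat_inv n (DF xs)) (vsub (vsub (F x) (F xs)) (mv n (DF x) (vsub x xs)))).
{ apply mv_ext. intros i Hi. unfold u. rewrite (inv_r n (DF x) Di _ HDi i Hi).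
  unfold vsub. rewrite (HFxs i Hi). unfold vzero. ring. }
rewrite Heq in H1.
assert (- df t * vnorm n u <= df t * t - f t) by lra.
apply (Rmult_le_reg_l (- df t)). lra.
replace (- df t * (f t / df t - t)) with (df t * t - f t) by (field; lra). exact H.
Qed.
End Maj.


Lemma condg_prop n C y x eps z : is_convex C -> C x -> 0 <= eps -> CondG n C y x eps z ->
  C z /\ forall u, C u -> vdot n (vsub z y) (vsub u z) >= - eps.
Proof.
intros Hconv Hx Heps [T [zs [us [H0 [HT [Hopt [Hstep Hstop]]]]]]].
assert (HC : forall t, (t <= T)%nat -> C (zs t)).
{ induction t as [|t IH]; intros Ht. rewrite H0; exact Hx.
  destruct (Hstep t ltac:(lia)) as [Hlt Heq]. rewrite Heq.
  apply Hconv. apply IH; lia. apply (Hopt t ltac:(lia)).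
  set (g := vdot n (vsub (zs t) y) (vsub (us t) (zs t))) in *.
  set (q := vnorm n (vsub (us t) (zs t)) ^ 2).
  assert (Hq : 0 <= q) by (unfold q; apply pow_le, vnorm_ge0).
  assert (0 <= - g / q).
  { destruct (Req_dec q 0) as [Hq0|Hq0]. rewrite Hq0. unfold Rdiv. rewrite Rinv_0. lra.
    unfold Rdiv; apply Rmult_le_pos; [lra|]. left; apply Rinv_0_lt_compat; lra. }
  split. apply Rmin_glb; lra. apply Rmin_l. }
rewrite <- HT. split. apply HC; lia.
intros u Hu. destruct (Hopt T (le_n T)) as [_ Hmin]. specialize (Hmin u Hu). lra.
Qed.

Lemma condg_dist n C y x eps z xs : is_convex C -> C x -> C xs -> 0 <= eps -> CondG n C y x eps z ->
  C z /\ vnorm n (vsub z xs) <= vnorm n (vsub y xs) + sqrt eps.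
Proof.
intros Hconv Hx Hxs Heps HG. destruct (condg_prop n C y x eps z Hconv Hx Heps HG) as [Hz Hopt].
split; [exact Hz|]. specialize (Hopt xs Hxs).
set (a := vnorm n (vsub z xs)). set (b := vnorm n (vsub y xs)).
assert (Hsq : a * a <= eps + b * a).
{ replace (a * a) with (vdot n (vsub z xs) (vsub z xs)) by (unfold a; symmetry; apply vnorm_sq).
  assert (vdot n (vsub z xs) (vsub z xs) = - vdot n (vsub z y) (vsub xs z) + vdot n (vsub y xs) (vsub z xs)).
  { unfold vdot.
    replace (- rsum n (fun i => vsub z y i * vsub xs z i) + rsum n (fun i => vsub y xs i * vsub z xs i))
      with (rsum n (fun i => (-1) * (vsub z y i * vsub xs z i) + vsub y xs i * vsub z xs i))
      by (rewrite rsum_plus, rsum_scal; ring).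
    apply rsum_ext. intros; unfold vsub; ring. }
  pose proof (vdot_le n (vsub y xs) (vsub z xs)) as Hle. fold a b in Hle. lra. }
pose proof (sqrt_pos eps). pose proof (sqrt_sqrt eps Heps).
assert (Ha : 0 <= a) by apply vnorm_ge0. assert (Hb : 0 <= b) by apply vnorm_ge0.
apply Rnot_lt_le. intro Hlt.
assert (a * a > a * (b + sqrt eps)) by (apply Rmult_lt_compat_l; lra).
assert (a * sqrt eps >= sqrt eps * sqrt eps) by (apply Rle_ge, Rmult_le_compat_r; lra).
nra.
Qed.

Lemma mv_vzero n A : veq n (mv n A vzero) vzero.
Proof. intros i Hi. unfold mv, vzero. transitivity (rsum n (fun _ => 0)). apply rsum_ext; intros; ring. apply rsum_zero. Qed.

Lemma inv_inj n A B v : is_inverse n A B -> veq n (mv n A v) vzero -> veq n v vzero.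
Proof.
intros HAB Hv i Hi. rewrite <- (inv_l n A B v HAB i Hi). rewrite (mv_ext n B _ _ Hv). apply mv_vzero; auto.
Qed.

Section Step.
Variables (n : nat) (Om : vec -> Prop) (F : vec -> vec) (DF : vec -> mat) (C : vec -> Prop)
  (xs : vec) (Rr : R) (f df : R -> R) (th w1 w2 : R).
Hypothesis HR : Rr > 0.
Hypothesis HF : C1_map n Om F DF.
Hypothesis Hf : C1_interval f df 0 Rr.
Hypothesis Hh1 : f 0 = 0 /\ df 0 = -1.
Hypothesis Hh2 : forall a b, 0 <= a -> a < b -> b < Rr -> df a < df b.
Hypothesis HDFxs : invertible n (DF xs).
Hypothesis Hmaj : forall tau z, 0 <= tau <= 1 -> ball n xs (kappa n Om xs Rr) z ->
     opnorm n (mm n (mat_inv n (DF xs))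
                 (msub (DF z) (DF (vadd xs (vscal tau (vsub z xs))))))
     <= df (vnorm n (vsub z xs)) - df (tau * vnorm n (vsub z xs)).
Hypothesis HFxs : veq n (F xs) vzero.
Hypothesis Hxs : C xs.
Hypothesis HCconv : is_convex C.
Hypothesis Hth : 0 <= th < 1.
Hypothesis Hw : 0 <= w2 < w1.
Hypothesis Hw1 : w1 * th + w2 < 1.

Lemma step x M s r y z P eta theta :
  ball n xs (kappa n Om xs Rr) x -> df (vnorm n (vsub x xs)) < 0 -> C x ->
  invertible n M -> veq n (mv n M s) (vadd (vopp (F x)) r) -> y = vadd x s ->
  CondG n C y x (theta * (vnorm n s)^2) z ->
  opnorm n (mm n (mat_inv n M) (DF x)) <= w1 ->
  opnorm n (msub (mm n (mat_inv n M) (DF x)) idm) <= w2 ->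
  invertible n P ->
  vnorm n (mv n P r) <= eta * vnorm n (mv n P (F x)) ->
  0 <= eta * cond n (mm n P (DF x)) <= th ->
  0 <= theta ->
  C z /\
  vnorm n (vsub z xs) <=
    w1 * (1 + th) * (f (vnorm n (vsub x xs)) / df (vnorm n (vsub x xs)) - vnorm n (vsub x xs))
    + (w1 * th + w2) * vnorm n (vsub x xs)
    + sqrt theta * (w1 * (1 + th) * (f (vnorm n (vsub x xs)) / df (vnorm n (vsub x xs)))).
Proof.
intros Hx Hneg HCx HM Hs Hy HG HM1 HM2 HP Hr Heta Htheta.
assert (Hw21 : w2 < 1) by (assert (0 <= w1 * th) by (apply Rmult_le_pos; lra); lra).
set (d := vsub x xs) in *.
set (t := vnorm n d) in *.
set (D := DF x) in *. set (Mi := mat_inv n M). set (A := mm n Mi D).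
assert (HMi := mat_inv_spec n M HM). fold Mi in HMi.
assert (HAv : forall v, vnorm n (vsub (mv n A v) v) <= w2 * vnorm n v).
{ intros v. rewrite <- (vnorm_ext n (mv n (msub A idm) v)).
  apply (Rle_trans _ _ _ (opnorm_bound n _ v)). apply Rmult_le_compat_r; [apply vnorm_ge0|exact HM2].
  rewrite mv_msub. intros i Hi. unfold vsub. rewrite (mv_idm n v i Hi). reflexivity. }
assert (HA : forall v, vnorm n (mv n A v) <= w1 * vnorm n v).
{ intros v. apply (Rle_trans _ _ _ (opnorm_bound n _ v)). apply Rmult_le_compat_r; [apply vnorm_ge0|exact HM1]. }
assert (HDinv : invertible n D).
{ apply inj_invertible. intros v Hv.
  assert (HAv0 : veq n (mv n A v) vzero).
  { unfold A. rewrite mv_mm. rewrite (mv_ext n Mi _ _ Hv). apply mv_vzero. }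
  specialize (HAv v). rewrite (vnorm_ext n (vsub (mv n A v) v) (vopp v)) in HAv.
  rewrite vnorm_opp in HAv. apply vnorm_zero. pose proof (vnorm_ge0 n v). nra.
  intros i Hi. unfold vsub, vopp. rewrite (HAv0 i Hi). unfold vzero. ring. }
destruct HDinv as [Di HDi].
set (u := mv n Di (vsub (F x) (mv n D d))).
assert (Hu : vnorm n u <= f t / df t - t) by (apply (u_bound n Om F DF xs Rr f df); auto).
assert (HFx : veq n (F x) (mv n D (vadd u d))).
{ intros i Hi. rewrite mv_add. unfold vadd. unfold u. rewrite (inv_r n D Di _ HDi i Hi). unfold vsub. ring. }
assert (Hud : vnorm n (vadd u d) <= f t / df t).
{ apply (Rle_trans _ _ _ (vnorm_add n u d)). fold t. lra. }
set (Q := mm n P D).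
assert (HQinv : invertible n Q).
{ apply inj_invertible. intros v Hv. destruct HP as [Pi HPi].
  apply (inv_inj n D Di v HDi). apply (inv_inj n P Pi _ HPi). unfold Q in Hv. rewrite mv_mm in Hv. exact Hv. }
set (Qi := mat_inv n Q). assert (HQi := mat_inv_spec n Q HQinv). fold Qi in HQi.
set (v := mv n Di r).
assert (HQv : veq n (mv n Q v) (mv n P r)).
{ unfold Q, v. rewrite mv_mm. rewrite (mv_ext n P _ _ (inv_r n D Di r HDi)). intros i _; reflexivity. }
assert (Hvn : vnorm n v <= opnorm n Qi * vnorm n (mv n P r)).
{ rewrite (vnorm_ext n v (mv n Qi (mv n P r))). apply opnorm_bound.
  intros i Hi. rewrite <- (mv_ext n Qi _ _ HQv). symmetry. apply (inv_l n Q Qi v HQi i Hi). }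
assert (HPF : vnorm n (mv n P (F x)) <= opnorm n Q * vnorm n (vadd u d)).
{ rewrite (mv_ext n P _ _ HFx). unfold Q. rewrite <- mv_mm. apply opnorm_bound. }
assert (Hv : vnorm n v <= th * vnorm n (vadd u d)).
{ pose proof (opnorm_ge0 n Qi). pose proof (opnorm_ge0 n Q). pose proof (vnorm_ge0 n (mv n P r)).
  pose proof (vnorm_ge0 n (vadd u d)). unfold cond in Heta. fold Q Qi in Heta.
  destruct (Rle_or_lt 0 eta) as [He|He].
  - assert (vnorm n (mv n P r) <= eta * (opnorm n Q * vnorm n (vadd u d))).
    { apply (Rle_trans _ _ _ Hr). apply Rmult_le_compat_l; auto. }
    assert (opnorm n Qi * vnorm n (mv n P r) <= opnorm n Qi * (eta * (opnorm n Q * vnorm n (vadd u d)))).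
    { apply Rmult_le_compat_l; auto. }
    assert (opnorm n Qi * (eta * (opnorm n Q * vnorm n (vadd u d))) = eta * (opnorm n Qi * opnorm n Q) * vnorm n (vadd u d)) by ring.
    assert (eta * (opnorm n Qi * opnorm n Q) * vnorm n (vadd u d) <= th * vnorm n (vadd u d)).
    { apply Rmult_le_compat_r; lra. }
    lra.
  - pose proof (vnorm_ge0 n (mv n P (F x))).
    assert (vnorm n (mv n P r) <= 0) by nra.
    assert (0 <= th * vnorm n (vadd u d)) by nra. nra. }
assert (Hsv : veq n s (mv n A (vsub v (vadd u d)))).
{ intros i Hi. unfold A. rewrite mv_mm.
  rewrite <- (inv_l n M Mi s HMi i Hi). apply (f_equal (fun g => g i)). apply mv_ext.
  intros j Hj. transitivity (- F x j + r j). rewrite (Hs j Hj); reflexivity.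
  rewrite (HFx j Hj). rewrite mv_sub. unfold v. unfold vsub at 1. rewrite (inv_r n D Di r HDi j Hj). ring. }
assert (Hsn : vnorm n s <= w1 * (1 + th) * (f t / df t)).
{ rewrite (vnorm_ext n _ _ Hsv). apply (Rle_trans _ _ _ (HA _)).
  pose proof (vnorm_sub n v (vadd u d)). pose proof (vnorm_ge0 n (vadd u d)).
  assert (vnorm n (vsub v (vadd u d)) <= (1 + th) * (f t / df t)) by nra.
  assert (0 <= w1) by lra. nra. }
assert (Hyv : veq n (vsub y xs) (vsub (mv n A (vsub v u)) (vsub (mv n A d) d))).
{ intros i Hi. transitivity (x i + s i - xs i). rewrite Hy; reflexivity.
  rewrite (Hsv i Hi). rewrite !mv_sub, mv_add. unfold vsub, vadd. unfold d. unfold vsub. ring. }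
assert (Hyn : vnorm n (vsub y xs) <= w1 * (1 + th) * (f t / df t - t) + (w1 * th + w2) * t).
{ rewrite (vnorm_ext n _ _ Hyv). apply (Rle_trans _ _ _ (vnorm_sub n _ _)).
  pose proof (HA (vsub v u)). pose proof (HAv d). fold t in H0.
  pose proof (vnorm_sub n v u). pose proof (vnorm_add n u d). fold t in H2.
  pose proof (vnorm_ge0 n u).
  assert (vnorm n v <= th * (f t / df t - t) + th * t).
  { apply (Rle_trans _ _ _ Hv). nra. }
  assert (0 <= w1) by lra.
  assert (w1 * vnorm n (vsub v u) <= w1 * ((th * (f t / df t - t) + th * t) + (f t / df t - t))).
  { apply Rmult_le_compat_l; auto. lra. }
  lra. }
assert (Heps : 0 <= theta * vnorm n s ^ 2) by (apply Rmult_le_pos; auto; apply pow_le, vnorm_ge0).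
destruct (condg_dist n C y x _ z xs HCconv HCx Hxs Heps HG) as [Hz Hzd].
split; [exact Hz|].
rewrite sqrt_mult, sqrt_pow2 in Hzd by (auto; try apply pow_le; apply vnorm_ge0).
pose proof (sqrt_pos theta).
assert (sqrt theta * vnorm n s <= sqrt theta * (w1 * (1 + th) * (f t / df t))) by (apply Rmult_le_compat_l; auto).
lra.
Qed.
End Step.


Lemma F_zero n Om F DF xs z : C1_map n Om F DF -> Om xs -> Om z -> veq n (F xs) vzero ->
  vnorm n (vsub z xs) = 0 -> veq n (F z) vzero.
Proof.
intros [HF1 _] Hxs Hz HFxs H0.
destruct (HF1 xs Hxs 1 ltac:(lra)) as [d [Hd H]].
assert (Hzz : vadd xs (vsub z xs) = z) by (apply functional_extensionality; intro i; unfold vadd, vsub; ring).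
specialize (H (vsub z xs) ltac:(lra) ltac:(rewrite Hzz; exact Hz)).
rewrite Hzz, H0 in H.
assert (Hn : vnorm n (vsub (vsub (F z) (F xs)) (mv n (DF xs) (vsub z xs))) = 0)
  by (pose proof (vnorm_ge0 n (vsub (vsub (F z) (F xs)) (mv n (DF xs) (vsub z xs)))); lra).
apply vnorm_zero in Hn. apply vnorm_zero in H0.
intros i Hi. specialize (Hn i Hi).
assert (Hm : mv n (DF xs) (vsub z xs) i = 0).
{ rewrite (mv_ext n (DF xs) _ _ H0). apply (mv_vzero n (DF xs) i Hi). }
change (F z i - F xs i - mv n (DF xs) (vsub z xs) i = 0) in Hn.
rewrite Hm, (HFxs i Hi) in Hn. unfold vzero in *. lra.
Qed.

Lemma sqrt_add_le a b : 0 <= b -> sqrt (a + b * b) <= sqrt a + b.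
Proof.
intros Hb. destruct (Rle_or_lt 0 a) as [Ha|Ha].
- pose proof (sqrt_pos a). pose proof (sqrt_sqrt a Ha).
  rewrite <- (sqrt_pow2 (sqrt a + b)) by lra. apply sqrt_le_1_alt. simpl.
  assert (0 <= sqrt a * b) by (apply Rmult_le_pos; lra). nra.
- rewrite (sqrt_neg_0 a) by lra.
  destruct (Rle_or_lt 0 (a + b * b)).
  + rewrite Rplus_0_l. pattern b at 3. rewrite <- (sqrt_pow2 b) by lra. apply sqrt_le_1_alt. simpl. lra.
  + rewrite sqrt_neg_0 by lra. lra.
Qed.

Lemma Rpower_div a b z : 0 < a -> 0 < b -> Rpower (a / b) z = Rpower a z / Rpower b z.
Proof.
intros Ha Hb. unfold Rpower. unfold Rdiv. rewrite ln_mult, ln_Rinv by (try apply Rinv_0_lt_compat; lra).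
replace (z * (ln a + - ln b)) with (z * ln a + - (z * ln b)) by ring.
rewrite exp_plus, exp_Ropp. reflexivity.
Qed.

Lemma cont_f f df Rr L : C1_interval f df 0 Rr -> 0 < L < Rr -> continuity_pt f L /\ continuity_pt df L.
Proof.
intros [H1 H2] HL. split.
- intros e He. destruct (H1 L ltac:(lra) (1) ltac:(lra)) as [d [Hd H]].
  exists (Rmin (Rmin d (Rmin L (Rr - L))) (e / (Rabs (df L) + 1 + 1))).
  assert (Hp : e / (Rabs (df L) + 1 + 1) > 0) by (apply Rdiv_lt_0_compat; [lra|pose proof (Rabs_pos (df L)); lra]).
  assert (Hm1 : Rmin (Rmin d (Rmin L (Rr - L))) (e / (Rabs (df L) + 1 + 1)) <= Rmin d (Rmin L (Rr - L))) by apply Rmin_l.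
  assert (Hm2 : Rmin (Rmin d (Rmin L (Rr - L))) (e / (Rabs (df L) + 1 + 1)) <= e / (Rabs (df L) + 1 + 1)) by apply Rmin_r.
  assert (Hm3 : Rmin d (Rmin L (Rr - L)) <= d) by apply Rmin_l.
  assert (Hm4 : Rmin d (Rmin L (Rr - L)) <= Rmin L (Rr - L)) by apply Rmin_r.
  assert (Hm5 : Rmin L (Rr - L) <= L) by apply Rmin_l.
  assert (Hm6 : Rmin L (Rr - L) <= Rr - L) by apply Rmin_r.
  split. apply Rmin_glb_lt; [apply Rmin_glb_lt; [lra|apply Rmin_glb_lt; lra]|lra].
  intros s [_ Hs]. simpl in Hs. unfold R_dist in *. simpl. unfold R_dist.
  assert (Hs' : 0 <= s < Rr) by (apply Rabs_def2 in Hs; lra).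
  specialize (H s Hs' ltac:(lra)).
  apply Rabs_le_between in H.
  pose proof (Rabs_pos (s - L)). pose proof (Rabs_pos (df L)).
  assert (Habs : Rabs (df L * (s - L)) = Rabs (df L) * Rabs (s - L)) by apply Rabs_mult.
  assert (Hb : Rabs (f s - f L) <= (Rabs (df L) + 1) * Rabs (s - L)).
  { replace (f s - f L) with ((f s - f L - df L * (s - L)) + df L * (s - L)) by ring.
    apply (Rle_trans _ _ _ (Rabs_triang _ _)). rewrite Habs.
    assert (Rabs (f s - f L - df L * (s - L)) <= 1 * Rabs (s - L)) by (apply Rabs_le; lra). lra. }
  apply (Rle_lt_trans _ _ _ Hb).
  assert (Rabs (s - L) < e / (Rabs (df L) + 1 + 1)) by lra.
  apply (Rle_lt_trans _ ((Rabs (df L) + 1 + 1) * Rabs (s - L))). nra.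
  apply (Rmult_lt_reg_r (/ (Rabs (df L) + 1 + 1))). apply Rinv_0_lt_compat; lra.
  replace ((Rabs (df L) + 1 + 1) * Rabs (s - L) * / (Rabs (df L) + 1 + 1)) with (Rabs (s - L)) by (field; lra).
  unfold Rdiv in *. lra.
- intros e He. destruct (H2 L ltac:(lra) e He) as [d [Hd H]].
  exists (Rmin d (Rmin L (Rr - L))).
  assert (Hm3 : Rmin d (Rmin L (Rr - L)) <= d) by apply Rmin_l.
  assert (Hm4 : Rmin d (Rmin L (Rr - L)) <= Rmin L (Rr - L)) by apply Rmin_r.
  assert (Hm5 : Rmin L (Rr - L) <= L) by apply Rmin_l.
  assert (Hm6 : Rmin L (Rr - L) <= Rr - L) by apply Rmin_r.
  split. apply Rmin_glb_lt; [lra|apply Rmin_glb_lt; lra].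
  intros s [_ Hs]. simpl in Hs. unfold R_dist in *. simpl. unfold R_dist.
  assert (Hs' : 0 <= s < Rr) by (apply Rabs_def2 in Hs; lra).
  apply H; auto. lra.
Qed.

Lemma cont_G f df Rr K c L : C1_interval f df 0 Rr -> 0 < L < Rr -> df L < 0 ->
  forall e, e > 0 -> exists a, a > 0 /\ forall t, Rabs (t - L) < a ->
    Rabs ((K * (f t / (t * df t) - 1) + c) - (K * (f L / (L * df L) - 1) + c)) < e.
Proof.
intros Hf HL Hneg e He. destruct (cont_f f df Rr L Hf HL) as [Cf Cdf].
assert (HC : continuity_pt (plus_fct (mult_fct (fct_cte K) (minus_fct (div_fct f (mult_fct id df)) (fct_cte 1))) (fct_cte c)) L).
{ apply continuity_pt_plus; [|apply continuity_pt_const; intros ? ?; reflexivity].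
  apply continuity_pt_mult; [apply continuity_pt_const; intros ? ?; reflexivity|].
  apply continuity_pt_minus; [|apply continuity_pt_const; intros ? ?; reflexivity].
  apply continuity_pt_div; auto.
  apply continuity_pt_mult; auto. apply derivable_continuous_pt, derivable_pt_id.
  unfold mult_fct, id. nra. }
destruct (HC e He) as [a [Ha H]]. exists a. split; auto.
intros t Ht. destruct (Req_dec t L) as [->|Hne].
- unfold Rminus at 1. rewrite Rplus_opp_r, Rabs_R0. lra.
- specialize (H t (conj (conj I (not_eq_sym Hne)) Ht)). simpl in H. unfold R_dist in H.
  unfold plus_fct, mult_fct, minus_fct, div_fct, fct_cte, id in H. exact H.
Qed.


Theorem theorem1
  (n : nat) (Om : vec -> Prop) (F : vec -> vec) (DF : vec -> mat)
  (C : vec -> Prop) (xs : vec) (Rr : R) (f df : R -> R)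
  (th w1 w2 lam : R)
  (x0 : vec) (theta : nat -> R) (M : nat -> mat) (s r y x : nat -> vec)
  (P : nat -> mat) (eta : nat -> R)
  (* setting *)
  (HOm : is_open n Om)
  (HF : C1_map n Om F DF)
  (HCne : exists c, C c) (HCconv : is_convex C) (HCcomp : is_compact n C)
  (HCOm : forall z, C z -> Om z)
  (Hxs : C xs) (HFxs : veq n (F xs) vzero) (HDFxs : invertible n (DF xs))
  (* majorant assumptions *)
  (HR : Rr > 0)
  (Hf : C1_interval f df 0 Rr)
  (Hmaj : forall tau z, 0 <= tau <= 1 -> ball n xs (kappa n Om xs Rr) z ->
     opnorm n (mm n (mat_inv n (DF xs))
                 (msub (DF z) (DF (vadd xs (vscal tau (vsub z xs))))))
     <= df (vnorm n (vsub z xs)) - df (tau * vnorm n (vsub z xs)))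
  (Hh1 : f 0 = 0 /\ df 0 = -1)
  (Hh2 : forall a b, 0 <= a -> a < b -> b < Rr -> df a < df b)
  (* constants *)
  (Hth : 0 <= th < 1) (Hw : 0 <= w2 < w1) (Hw1 : w1 * th + w2 < 1)
  (Hlam : 0 <= lam < (1 - w2 - w1 * th) / (w1 * (1 + th)))
  (* initial point and parameters *)
  (Hx0C : C x0)
  (Hx0b : ball n xs (Rmin (kappa n Om xs Rr) (rho f df Rr w1 w2 th lam)) x0)
  (Hx0ne : ~ veq n x0 xs)
  (Htheta : forall k, 0 <= theta k <= lam ^ 2 / 2)
  (* the iteration *)
  (Hit : INL_CondG n C F x0 theta M s r y x)
  (HM1 : forall k, opnorm n (mm n (mat_inv n (M k)) (DF (x k))) <= w1)
  (HM2 : forall k, opnorm n (msub (mm n (mat_inv n (M k)) (DF (x k))) idm) <= w2)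
  (HP : forall k, invertible n (P k))
  (Hr : forall k, vnorm n (mv n (P k) (r k)) <= eta k * vnorm n (mv n (P k) (F (x k))))
  (Heta : forall k, 0 <= eta k * cond n (mm n (P k) (DF (x k))) <= th) :
  let sigma := Rmin (kappa n Om xs Rr) (rho f df Rr w1 w2 th lam) in
  (forall k, ball n xs sigma (x k) /\ C (x k)) /\
  Un_cv (fun k => vnorm n (vsub (x k) xs)) 0 /\
  (forall k, vnorm n (vsub (x (S k)) xs) < vnorm n (vsub (x k) xs)) /\
  (forall thtil, is_limsup theta thtil ->
     forall e, e > 0 -> exists N, forall k, (N <= k)%nat ->
       vnorm n (vsub (x (S k)) xs) / vnorm n (vsub (x k) xs)
       <= w1 * ((1 + th) * sqrt (2 * thtil) + th) + w2 + e) /\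
  (forall p, 0 < p <= 1 ->
     (forall a b, 0 < a -> a < b -> b < nu df Rr ->
        (f a / df a - a) / Rpower a (p + 1) < (f b / df b - b) / Rpower b (p + 1)) ->
     forall k,
       vnorm n (vsub (x (S k)) xs) <=
         w1 * (1 + th) * (1 + lam)
           * (f (vnorm n (vsub x0 xs)) / df (vnorm n (vsub x0 xs)) - vnorm n (vsub x0 xs))
           * Rpower (vnorm n (vsub (x k) xs) / vnorm n (vsub x0 xs)) (p + 1)
         + (w1 * ((1 + th) * lam + th) + w2) * vnorm n (vsub (x k) xs)).
Proof.
intros sigma.
destruct Hit as [Hx0 Hk].
assert (HOmxs : Om xs) by auto.
assert (Hsk : sigma <= kappa n Om xs Rr) by apply Rmin_l.
assert (Hsr : sigma <= rho f df Rr w1 w2 th lam) by apply Rmin_r.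
set (T := fun k => vnorm n (vsub (x k) xs)).
set (t0 := vnorm n (vsub x0 xs)).
assert (Ht0s : t0 < sigma) by exact Hx0b.
assert (Ht0pos : 0 < t0).
{ destruct (Rle_or_lt t0 0) as [H|H]; auto. exfalso. apply Hx0ne.
  assert (H0 : vnorm n (vsub x0 xs) = 0) by (pose proof (vnorm_ge0 n (vsub x0 xs)); unfold t0 in H; lra).
  apply vnorm_zero in H0. intros i Hi. specialize (H0 i Hi). unfold vsub, vzero in H0. lra. }
destruct (rho_delta f df Rr HR Hf Hh1 w1 w2 th lam Hth Hw Hlam t0 ltac:(lra)) as [d0 [Htd [[Hd0 Hd0nu] Hg]]].
pose proof (nu_le f df Rr HR Hh1) as HnuR.
set (K := w1 * (1 + th) * (1 + lam)).
set (c := w1 * ((1 + th) * lam + th) + w2).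
assert (Hw10 : 0 < w1) by lra.
assert (HK : 0 < K) by (unfold K; apply Rmult_lt_0_compat; [apply Rmult_lt_0_compat|]; lra).
assert (Hc0 : 0 <= c) by (unfold c; assert (0 <= (1 + th) * lam + th) by nra; nra).
set (phi := fun t => f t / df t - t).
set (Gf := fun t => K * (f t / (t * df t) - 1) + c).
assert (Hstep : forall k, C (x k) -> 0 < T k -> T k <= t0 ->
  C (x (S k)) /\ T (S k) <= K * phi (T k) + c * T k /\ 0 <= phi (T k) /\
  T (S k) <= w1 * (1 + th) * phi (T k) + (w1 * th + w2) * T k + sqrt (theta k) * (w1 * (1 + th) * (phi (T k) + T k))).
{ intros k HC HT0 HTt.
  destruct (Hk k) as [HFne [HMinv [Hs [Hy HG]]]].
  assert (Hb : ball n xs (kappa n Om xs Rr) (x k)) by (unfold ball; fold (T k); lra).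
  assert (Hneg : df (T k) < 0) by (apply (df_neg f df Rr HR Hh1 Hh2); split; [apply vnorm_ge0|lra]).
  destruct (Htheta k) as [Hth0 Hth1].
  destruct (step n Om F DF C xs Rr f df th w1 w2 HR HF Hf Hh1 Hh2 HDFxs Hmaj HFxs Hxs HCconv Hth Hw Hw1
     (x k) (M k) (s k) (r k) (y k) (x (S k)) (P k) (eta k) (theta k)
     Hb Hneg HC HMinv Hs Hy HG (HM1 k) (HM2 k) (HP k) (Hr k) (Heta k) Hth0) as [HCs Hbd].
  fold (T k) in Hbd. fold (T (S k)) in Hbd.
  assert (Hef := ef_nonneg n Om F DF xs Rr f df HR HF Hf Hh1 Hh2 Hmaj (x k) Hb). fold (T k) in Hef.
  assert (Hphi : 0 <= phi (T k)).
  { unfold phi. replace (f (T k) / df (T k) - T k) with ((df (T k) * T k - f (T k)) / (- df (T k))) by (field; lra).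
    apply Rmult_le_pos; [lra|]. left; apply Rinv_0_lt_compat; lra. }
  assert (Hsq : sqrt (theta k) <= lam).
  { rewrite <- (sqrt_pow2 lam) by lra. apply sqrt_le_1_alt. simpl. nra. }
  replace (f (T k) / df (T k)) with (phi (T k) + T k) in Hbd by (unfold phi; ring).
  fold (phi (T k)) in Hbd.
  split; [exact HCs|]. split; [|split; [exact Hphi|]].
  - assert (0 <= w1 * (1 + th) * (phi (T k) + T k)) by (apply Rmult_le_pos; [nra|lra]).
    assert (sqrt (theta k) * (w1 * (1 + th) * (phi (T k) + T k)) <= lam * (w1 * (1 + th) * (phi (T k) + T k))).
    { apply Rmult_le_compat_r; auto. }
    unfold K, c. nra.
  - replace (w1 * (1 + th) * (phi (T k) + T k)) with (w1 * (1 + th) * (phi (T k) + T k)) by ring. lra. }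
assert (HGf : forall t, 0 < t -> df t < 0 -> K * phi t + c * t = t * Gf t).
{ intros t Ht Hdt. unfold phi, Gf. field. lra. }
assert (Hinv : forall k, C (x k) /\ 0 < T k /\ T k <= t0).
{ induction k as [|k [HC [HT0 HTt]]].
  - unfold T. rewrite Hx0. fold t0. split; [exact Hx0C|]. lra.
  - destruct (Hstep k HC HT0 HTt) as [HCs [Hbd _]].
    assert (Hneg : df (T k) < 0) by (apply (df_neg f df Rr HR Hh1 Hh2); split; lra).
    rewrite (HGf (T k) HT0 Hneg) in Hbd.
    assert (Gf (T k) < 1) by (unfold Gf, K, c; rewrite <- Rplus_assoc; apply Hg; lra).
    split; [exact HCs|]. split.
    + destruct (Rlt_or_le 0 (T (S k))) as [Hp0|Hp0]; auto. exfalso.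
      destruct (Hk (S k)) as [HFne _]. apply HFne.
      apply (F_zero n Om F DF xs (x (S k)) HF HOmxs (HCOm _ HCs) HFxs).
      pose proof (vnorm_ge0 n (vsub (x (S k)) xs)). unfold T in Hp0. lra.
    + assert (T k * Gf (T k) < T k * 1) by (apply Rmult_lt_compat_l; lra). lra. }
assert (Hdec : forall k, T (S k) < T k).
{ intros k. destruct (Hinv k) as [HC [HT0 HTt]].
  destruct (Hstep k HC HT0 HTt) as [_ [Hbd _]].
  assert (Hneg : df (T k) < 0) by (apply (df_neg f df Rr HR Hh1 Hh2); split; lra).
  rewrite (HGf (T k) HT0 Hneg) in Hbd.
  assert (Gf (T k) < 1) by (unfold Gf, K, c; rewrite <- Rplus_assoc; apply Hg; lra).
  assert (T k * Gf (T k) < T k * 1) by (apply Rmult_lt_compat_l; lra). lra. }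
assert (Hcv : Un_cv T 0).
{ assert (Hd : Un_decreasing T) by (intros k; left; apply Hdec).
  assert (Hlb : has_lb T).
  { exists 0. intros y0 [i ->]. unfold opp_seq. destruct (Hinv i) as [_ [H _]]. lra. }
  destruct (decreasing_cv T Hd Hlb) as [L HL].
  assert (HLle := decreasing_ineq T L Hd HL).
  assert (HL0 : 0 <= L).
  { destruct (Rle_or_lt 0 L) as [H|H]; auto. exfalso.
    destruct (HL (- L) ltac:(lra)) as [N HN]. specialize (HN N (le_n N)). unfold R_dist in HN.
    destruct (Hinv N) as [_ [H1 _]]. apply Rabs_def2 in HN. lra. }
  destruct (Req_dec L 0) as [->|HLn0]; [exact HL|]. exfalso.
  assert (HLt : L <= t0) by (apply (Rle_trans _ (T 0%nat)); auto; destruct (Hinv 0%nat) as [_ [_ H]]; exact H).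
  assert (HLneg : df L < 0) by (apply (df_neg f df Rr HR Hh1 Hh2); split; lra).
  assert (HGL : Gf L < 1) by (unfold Gf, K, c; rewrite <- Rplus_assoc; apply Hg; lra).
  set (q := (1 + Gf L) / 2).
  destruct (cont_G f df Rr K c L Hf ltac:(lra) HLneg ((1 - Gf L) / 2) ltac:(lra)) as [a [Ha Hca]].
  set (eta0 := Rmin a (L * (1 - q) / 2)).
  assert (He1 : eta0 <= a) by apply Rmin_l. assert (He2 : eta0 <= L * (1 - q) / 2) by apply Rmin_r.
  assert (He0 : eta0 > 0) by (apply Rmin_glb_lt; [lra|unfold q; apply Rmult_lt_0_compat; [apply Rmult_lt_0_compat|]; lra]).
  destruct (HL eta0 He0) as [N HN]. specialize (HN N (le_n N)). unfold R_dist in HN.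
  specialize (Hca (T N) ltac:(lra)). unfold Gf in Hca. fold (Gf (T N)) (Gf L) in Hca.
  apply Rabs_def2 in Hca. apply Rabs_def2 in HN.
  destruct (Hinv N) as [HC [HT0 HTt]].
  destruct (Hstep N HC HT0 HTt) as [_ [Hbd _]].
  assert (Hneg : df (T N) < 0) by (apply (df_neg f df Rr HR Hh1 Hh2); split; lra).
  rewrite (HGf (T N) HT0 Hneg) in Hbd.
  assert (HqG : Gf (T N) <= q) by (unfold q; lra).
  assert (T N * Gf (T N) <= T N * q) by (apply Rmult_le_compat_l; lra).
  specialize (HLle (S N)).
  destruct (Rle_or_lt 0 q) as [Hq|Hq].
  - assert (T N * q <= (L + eta0) * q) by (apply Rmult_le_compat_r; lra).
    assert (q <= 1) by (unfold q; lra).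
    assert (eta0 * q <= L * (1 - q) / 2) by nra.
    assert (L * (1 - q) / 2 < L * (1 - q)) by (unfold q; nra).
    nra.
  - assert (T N * q < 0) by nra. lra. }
split; [|split; [exact Hcv|split; [exact Hdec|split]]].
- intros k. destruct (Hinv k) as [HC [_ HTt]]. split; [|exact HC]. unfold ball. fold (T k). lra.
-
  intros thtil Hls e He.
  set (e1 := e / (2 * K)).
  assert (He1 : e1 > 0) by (unfold e1; apply Rdiv_lt_0_compat; lra).
  destruct (near0 f df Rr HR Hf Hh1 e1 He1) as [d1 [Hd1 [_ Hnear]]].
  destruct (Hcv d1 Hd1) as [N1 HN1].
  set (e2 := e / (2 * (w1 * (1 + th)))).
  assert (Hw1p : 0 < w1 * (1 + th)) by nra.
  assert (He2 : e2 > 0) by (unfold e2; apply Rdiv_lt_0_compat; lra).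
  destruct (Hls (e2 * e2) ltac:(nra)) as [[N2 HN2] _].
  exists (N1 + N2)%nat. intros k Hk'.
  change (vnorm n (vsub (x (S k)) xs)) with (T (S k)). change (vnorm n (vsub (x k) xs)) with (T k).
  specialize (HN1 k ltac:(lia)). unfold R_dist in HN1. rewrite Rminus_0_r in HN1.
  specialize (HN2 k ltac:(lia)).
  destruct (Hinv k) as [HC [HT0 HTt]].
  rewrite Rabs_right in HN1 by lra.
  destruct (Hnear (T k) ltac:(lra)) as [Hneg Hrat].
  destruct (Hstep k HC HT0 HTt) as [_ [_ [Hphi Hbd]]].
  assert (Hsq : sqrt (theta k) <= sqrt (2 * thtil) + e2).
  { apply (Rle_trans _ (sqrt (thtil + e2 * e2))). apply sqrt_le_1_alt; lra.
    apply (Rle_trans _ (sqrt thtil + e2)). apply sqrt_add_le; lra.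
    assert (sqrt thtil <= sqrt (2 * thtil)).
    { destruct (Rle_or_lt 0 thtil). apply sqrt_le_1_alt; lra. rewrite !sqrt_neg_0 by lra. lra. }
    lra. }
  assert (Hsq2 : sqrt (theta k) <= lam).
  { destruct (Htheta k). rewrite <- (sqrt_pow2 lam) by lra. apply sqrt_le_1_alt. simpl. nra. }
  pose proof (sqrt_pos (theta k)).
  assert (Hrho : phi (T k) = T k * (f (T k) / (T k * df (T k)) - 1)) by (unfold phi; field; lra).
  set (rk := f (T k) / (T k * df (T k)) - 1) in *.
  assert (Hrk0 : 0 <= rk) by (rewrite Hrho in Hphi; nra).
  unfold Rdiv. apply (Rmult_le_reg_r (T k)); [lra|].
  rewrite Rmult_assoc, Rinv_l, Rmult_1_r by lra.
  rewrite Hrho in Hbd.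
  assert (H1 : w1 * (1 + th) * (T k * rk) + sqrt (theta k) * (w1 * (1 + th) * (T k * rk))
               <= e / 2 * T k).
  { assert (w1 * (1 + th) * (1 + sqrt (theta k)) * rk <= K * e1).
    { unfold K. apply Rmult_le_compat; try nra. }
    assert (K * e1 = e / 2) by (unfold e1; field; lra). nra. }
  assert (H2 : sqrt (theta k) * (w1 * (1 + th) * T k) <= (sqrt (2 * thtil) + e2) * (w1 * (1 + th) * T k))
    by (apply Rmult_le_compat_r; nra).
  assert (H3 : e2 * (w1 * (1 + th) * T k) = e / 2 * T k) by (unfold e2; field; lra).
  lra.
-
  intros p Hp Hh3 k.
  destruct (Hinv k) as [HC [HT0 HTt]].
  destruct (Hstep k HC HT0 HTt) as [_ [Hbd _]].
  fold t0. fold (T k). fold (T (S k)).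
  assert (Hnu : t0 < nu df Rr) by lra.
  assert (Hphik : phi (T k) <= phi t0 * Rpower (T k / t0) (p + 1)).
  { rewrite Rpower_div by lra.
    assert (Hpk : 0 < Rpower (T k) (p + 1)) by (unfold Rpower; apply exp_pos).
    assert (Hp0 : 0 < Rpower t0 (p + 1)) by (unfold Rpower; apply exp_pos).
    assert (Hle : phi (T k) / Rpower (T k) (p + 1) <= phi t0 / Rpower t0 (p + 1)).
    { destruct (Req_dec (T k) t0) as [->|Hne]. lra. left. apply Hh3; lra. }
    apply (Rmult_le_compat_r (Rpower (T k) (p + 1))) in Hle; [|lra].
    unfold Rdiv in Hle. rewrite Rmult_assoc, Rinv_l, Rmult_1_r in Hle by lra.
    unfold Rdiv. lra. }
  assert (K * phi (T k) <= K * (phi t0 * Rpower (T k / t0) (p + 1))) by (apply Rmult_le_compat_l; lra).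
  unfold phi, K, c in *. lra.
Qed.
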